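(* Let $\ell\in\{0,1,2,\ldots\}$. (1) For $q>2$, $$\tilde\gamma_\ell(q)=\frac{\log^{\ell+1}(q-1)-\log^{\ell+1}(q-2)}{2(\ell+1)}-\ell!\sum_{k=1}^\infty\frac{(-1)^k2^k}{(k+1)!}\sum_{j=0}^{\ell}\frac{(-1)^j}{j!}\,s(k+1,\ell-j+1)\,\zeta_E^{(j)}(k+1,q).$$ (2) For $q>1$, $$\tilde\gamma_\ell(q)=\frac{\log^{\ell+1}q-\log^{\ell+1}(q-1)}{2(\ell+1)}-\ell!\sum_{k=1}^\infty\frac{1}{(2k+1)!}\sum_{j=0}^{\ell}\frac{(-1)^j}{j!}\,s(2k+1,\ell-j+1)\,\zeta_E^{(j)}(2k+1,q).$$
   Context: For $q>0$, $\zeta_E(z,q)=\sum_{n=0}^\infty (-1)^n (n+q)^{-z}$ for $\mathrm{Re}(z)>0$, extended by analytic continuation to an entire function of $z$; $\zeta_E^{(m)}(z,q)$ denotes $\frac{\partial^m}{\partial z^m}\zeta_E(z,q)$. The modified Stieltjes constants $\tilde\gamma_k(q)$ are defined by the Taylor expansion $\zeta_E(z,q)=\sum_{k=0}^\infty\frac{(-1)^k\tilde\gamma_k(q)}{k!}(z-1)^k$. $s(n,k)$ are the (signed) Stirling numbers of the first kind: $x(x-1)\cdots(x-n+1)=\sum_{k=0}^n s(n,k)x^k$ (with $s(n,k)=0$ for $k>n$). *)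

(* Defs.v *)
From Stdlib Require Import Reals Arith Factorial.
From Coquelicot Require Import Coquelicot.
Open Scope R_scope.

(* Alternating Hurwitz zeta, zeta_E(z,q) = sum_{n>=0} (-1)^n (n+q)^{-z},
   for real z > 0 (the series converges there; it is the restriction of the
   entire function to the real half-line (0,+oo)). *)
Definition zetaE (z q : R) : R :=
  Series (fun n : nat => (-1) ^ n * Rpower (INR n + q) (- z)).

Definition zetaE_deriv (m : nat) (z q : R) : R :=
  Derive_n (fun w => zetaE w q) m z.

(* Modified Stieltjes constants: the Taylor expansion
   zeta_E(z,q) = sum_k (-1)^k gt_k(q)/k! (z-1)^k means
   gt_k(q) = (-1)^k zeta_E^{(k)}(1,q). *)
Definition gammaE (k : nat) (q : R) : R :=
  (-1) ^ k * zetaE_deriv k 1 q.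

(* Signed Stirling numbers of the first kind:
   x(x-1)...(x-n+1) = sum_k s(n,k) x^k. *)
Fixpoint stirling1 (n k : nat) : R :=
  match n, k with
  | O, O => 1
  | O, S _ => 0
  | S _, O => 0
  | S n', S k' => stirling1 n' k' - INR n' * stirling1 n' (S k')
  end.

(* Main.v *)
Require Import Defs.
From Stdlib Require Import Reals Arith Factorial Lra Lia.
From Coquelicot Require Import Coquelicot.
Open Scope R_scope.

Lemma isd_plus (f g : R -> R) x df dg :
  is_derive f x df -> is_derive g x dg -> is_derive (fun y => f y + g y) x (df + dg).
Proof. intros H1 H2. exact (is_derive_plus f g x df dg H1 H2). Qed.

Lemma isd_minus (f g : R -> R) x df dg :
  is_derive f x df -> is_derive g x dg -> is_derive (fun y => f y - g y) x (df - dg).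
Proof. intros H1 H2. exact (is_derive_minus f g x df dg H1 H2). Qed.

Lemma isd_mult (f g : R -> R) x df dg :
  is_derive f x df -> is_derive g x dg -> is_derive (fun y => f y * g y) x (df * g x + f x * dg).
Proof. intros H1 H2. exact (is_derive_mult f g x df dg H1 H2 Rmult_comm). Qed.

Lemma isd_scal (f : R -> R) x c df :
  is_derive f x df -> is_derive (fun y => c * f y) x (c * df).
Proof. intros H. exact (is_derive_scal f x c df H). Qed.

Lemma isd_comp (f g : R -> R) x df dg :
  is_derive f (g x) df -> is_derive g x dg -> is_derive (fun y => f (g y)) x (dg * df).
Proof. intros H1 H2. exact (is_derive_comp f g x df dg H1 H2). Qed.

Lemma isd_id x : is_derive (fun y : R => y) x 1.
Proof. exact (is_derive_id x). Qed.

Lemma isd_const (c : R) x : is_derive (fun _ : R => c) x 0.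
Proof. exact (is_derive_const c x). Qed.

Lemma isd_eq (f : R -> R) (x l l' : R) : is_derive f x l -> l = l' -> is_derive f x l'.
Proof. intros H ->; exact H. Qed.

Lemma isd_ext (f g : R -> R) (x l : R) :
  (forall t, f t = g t) -> is_derive f x l -> is_derive g x l.
Proof. intros E H. exact (is_derive_ext f g x l E H). Qed.

Lemma locally_interval (lo hi z : R) (P : R -> Prop) :
  lo < z < hi -> (forall y, lo < y < hi -> P y) -> locally z P.
Proof.
  intros Hz HP.
  assert (He : 0 < Rmin (z - lo) (hi - z)) by (apply Rmin_pos; lra).
  exists (mkposreal _ He). intros y Hy. apply HP.
  change (Rabs (y - z) < Rmin (z - lo) (hi - z)) in Hy.
  pose proof (Rmin_l (z - lo) (hi - z)). pose proof (Rmin_r (z - lo) (hi - z)).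
  apply Rabs_def2 in Hy. lra.
Qed.

Definition Smooth (lo hi : R) (F : nat -> R -> R) : Prop :=
  forall i z, lo < z < hi -> is_derive (F i) z (F (S i) z).

Lemma smooth_Derive_n lo hi F (f : R -> R) :
  Smooth lo hi F -> (forall z, lo < z < hi -> f z = F 0%nat z) ->
  forall i z, lo < z < hi -> Derive_n f i z = F i z.
Proof.
  intros HS Hf i. induction i as [|i IH]; intros z Hz.
  - simpl. now apply Hf.
  - simpl. rewrite (Derive_ext_loc _ (F i)).
    + apply is_derive_unique. now apply HS.
    + apply (locally_interval lo hi); auto.
Qed.

Lemma smooth_sub lo hi lo' hi' F :
  Smooth lo hi F -> lo <= lo' -> hi' <= hi -> Smooth lo' hi' F.
Proof. intros H H1 H2 i z Hz. apply H. lra. Qed.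

Lemma smooth_ext lo hi F G :
  Smooth lo hi F -> (forall i z, lo < z < hi -> F i z = G i z) -> Smooth lo hi G.
Proof.
  intros H E i z Hz. rewrite <- E by auto.
  apply is_derive_ext_loc with (F i).
  - apply (locally_interval lo hi); auto.
  - now apply H.
Qed.

Lemma smooth_plus lo hi F G :
  Smooth lo hi F -> Smooth lo hi G -> Smooth lo hi (fun i z => F i z + G i z).
Proof. intros H1 H2 i z Hz. apply isd_plus; auto. Qed.

Lemma smooth_minus lo hi F G :
  Smooth lo hi F -> Smooth lo hi G -> Smooth lo hi (fun i z => F i z - G i z).
Proof. intros H1 H2 i z Hz. apply isd_minus; auto. Qed.

Lemma smooth_scal lo hi c F :
  Smooth lo hi F -> Smooth lo hi (fun i z => c * F i z).
Proof. intros H1 i z Hz. apply isd_scal; auto. Qed.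

Lemma smooth_trans lo hi lo' hi' c F :
  Smooth lo hi F -> lo <= lo' + c -> hi' + c <= hi ->
  Smooth lo' hi' (fun i z => F i (z + c)).
Proof.
  intros H H1 H2 i z Hz.
  apply isd_eq with (1 * F (S i) (z + c)); [|ring].
  apply (isd_comp (F i) (fun y => y + c)).
  - apply H. lra.
  - apply isd_eq with (1 + 0); [|ring]. apply isd_plus; [apply isd_id|apply isd_const].
Qed.

Lemma smooth_refl lo hi lo' hi' F :
  Smooth lo hi F -> lo <= 1 - hi' -> 1 - lo' <= hi ->
  Smooth lo' hi' (fun i z => (-1) ^ i * F i (1 - z)).
Proof.
  intros H H1 H2 i z Hz.
  apply isd_eq with ((-1) ^ i * ((-1) * F (S i) (1 - z))); [| simpl; ring].
  apply isd_scal.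
  apply (isd_comp (F i) (fun y => 1 - y)).
  - apply H. lra.
  - apply isd_eq with (0 - 1); [|ring]. apply isd_minus; [apply isd_const|apply isd_id].
Qed.

Lemma ex_series_bound (a b : nat -> R) :
  (forall k, Rabs (a k) <= b k) -> ex_series b -> ex_series a.
Proof. intros H Hb. apply (ex_series_le a b); auto. Qed.

Lemma ex_series_abs_bound (a b : nat -> R) :
  (forall k, Rabs (a k) <= b k) -> ex_series b -> ex_series (fun k => Rabs (a k)).
Proof. intros H Hb. apply (ex_series_le (fun k => Rabs (a k)) b); auto. intro k.
  change (Rabs (Rabs (a k)) <= b k). rewrite Rabs_Rabsolu. auto. Qed.

Lemma Rabs_Series_le (a b : nat -> R) :
  (forall k, Rabs (a k) <= b k) -> ex_series b -> Rabs (Series a) <= Series b.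
Proof.
  intros H Hb. eapply Rle_trans. apply Series_Rabs.
  now apply ex_series_abs_bound with b.
  apply Series_le; auto. intro k; split; auto. apply Rabs_pos.
Qed.

Lemma Series_zero : Series (fun _ => 0) = 0.
Proof.
  rewrite (Series_ext (fun _ => 0) (fun n => 0 * (fun _ : nat => 0) n)) by (intro; ring).
  rewrite Series_scal_l; ring.
Qed.

Lemma Series_nonneg (a : nat -> R) : (forall k, 0 <= a k) -> ex_series a -> 0 <= Series a.
Proof.
  intros H He. rewrite <- Series_zero. apply Series_le; auto. intro; split; auto; lra.
Qed.

Lemma ex_series_scal_r (c : R) (a : nat -> R) : ex_series a -> ex_series (fun k => a k * c).
Proof. intros H. apply ex_series_ext with (fun k => scal c (a k)).
  intro k. unfold scal; simpl; unfold mult; simpl. ring. exact (@ex_series_scal_l R_AbsRing R_NormedModule c a H). Qed.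

Lemma Series_tail (a : nat -> R) N :
  ex_series a -> Series a = sum_f_R0 a N + Series (fun k => a (S N + k)%nat).
Proof. intros H. rewrite (Series_incr_n a (S N)); auto. lia. Qed.

Lemma ex_series_tail (a : nat -> R) N : ex_series a -> ex_series (fun k => a (S N + k)%nat).
Proof. intros H. apply ex_series_incr_n. exact H. Qed.

Lemma tail_small (M : nat -> R) eps :
  ex_series M -> 0 < eps -> exists N, Rabs (Series (fun k => M (S N + k)%nat)) < eps.
Proof.
  intros H He. pose proof (Series_correct _ H) as Hs.
  apply is_series_Reals in Hs. destruct (Hs eps He) as [N HN].
  exists N. specialize (HN N (le_n N)). unfold Rdist in HN.
  rewrite (Series_tail M N H) in HN.
  replace (sum_f_R0 M N - (sum_f_R0 M N + Series (fun k : nat => M (S N + k)%nat)))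
    with (- Series (fun k : nat => M (S N + k)%nat)) in HN by ring.
  rewrite Rabs_Ropp in HN. exact HN.
Qed.

Lemma isd_sum (u u' : nat -> R -> R) z N :
  (forall k, (k <= N)%nat -> is_derive (u k) z (u' k z)) ->
  is_derive (fun y => sum_f_R0 (fun k => u k y) N) z (sum_f_R0 (fun k => u' k z) N).
Proof.
  induction N as [|N IH]; intros H; simpl.
  - apply H; lia.
  - apply isd_plus. apply IH; intros; apply H; lia. apply H; lia.
Qed.

Lemma is_derive_series lo hi (u u' : nat -> R -> R) (M : nat -> R) z :
  lo < z < hi ->
  (forall k y, lo < y < hi -> is_derive (u k) y (u' k y)) ->
  (forall k y, lo < y < hi -> Rabs (u' k y) <= M k) ->
  ex_series M ->
  (forall y, lo < y < hi -> ex_series (fun k => u k y)) ->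
  is_derive (fun y => Series (fun k => u k y)) z (Series (fun k => u' k z)).
Proof.
  intros Hz Hd HM HMs Hu.
  assert (Mnn : forall k, 0 <= M k).
  { intro k. eapply Rle_trans; [apply Rabs_pos| apply (HM k z Hz)]. }
  assert (Hu' : ex_series (fun k => u' k z)).
  { apply ex_series_bound with M; auto. }
  apply is_derive_Reals. intros eps Heps.
  destruct (tail_small M (eps/4) HMs) as [N HN]; [lra|].
  set (TM := Series (fun k => M (S N + k)%nat)) in *.
  assert (TMnn : 0 <= TM).
  { unfold TM. apply Series_nonneg. intro; auto. apply ex_series_tail; auto. }
  rewrite Rabs_right in HN by lra.
  assert (dS := isd_sum u u' z N (fun k _ => Hd k z Hz)).
  apply is_derive_Reals in dS.
  destruct (dS (eps/2)) as [d1 Hd1]; [lra|].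
  assert (Hdel : 0 < Rmin d1 (Rmin (z - lo) (hi - z))).
  { apply Rmin_pos. apply (cond_pos d1). apply Rmin_pos; lra. }
  exists (mkposreal _ Hdel). intros h hne hlt. simpl in hlt.
  pose proof (Rmin_l d1 (Rmin (z - lo) (hi - z))).
  pose proof (Rmin_r d1 (Rmin (z - lo) (hi - z))).
  pose proof (Rmin_l (z - lo) (hi - z)). pose proof (Rmin_r (z - lo) (hi - z)).
  assert (Hzh : lo < z + h < hi) by (apply Rabs_def2 in hlt; lra).
  specialize (Hd1 h hne ltac:(lra)).
  rewrite (Series_tail _ N (Hu _ Hzh)), (Series_tail _ N (Hu _ Hz)), (Series_tail _ N Hu').
  set (S1 := sum_f_R0 (fun k => u k (z + h)) N) in *.
  set (S0 := sum_f_R0 (fun k => u k z) N) in *.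
  set (S' := sum_f_R0 (fun k => u' k z) N) in *.
  set (R1 := Series (fun k => u (S N + k)%nat (z + h))).
  set (R0 := Series (fun k => u (S N + k)%nat z)).
  set (C := Series (fun k => u' (S N + k)%nat z)).
  assert (HC : Rabs C <= TM).
  { apply Rabs_Series_le. intro k; apply HM; auto. apply (ex_series_tail M); auto. }
  assert (HR : Rabs (R1 - R0) <= TM * Rabs h).
  { unfold R1, R0. rewrite <- Series_minus.
    2: apply (ex_series_tail (fun k => u k (z + h))); auto.
    2: apply (ex_series_tail (fun k => u k z)); auto.
    unfold TM. rewrite <- Series_scal_r.
    apply Rabs_Series_le.
    - intro k. destruct (MVT_abs (u (S N + k)%nat) (u' (S N + k)%nat) z (z + h)) as [c [Hc1 Hc2]].
      + intros c Hc. apply is_derive_Reals. apply Hd.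
        unfold Rmin, Rmax in Hc. destruct (Rle_dec z (z+h)); lra.
      + rewrite Hc1. replace (z + h - z) with h by ring.
        apply Rmult_le_compat_r. apply Rabs_pos. apply HM.
        unfold Rmin, Rmax in Hc2. destruct (Rle_dec z (z+h)); lra.
    - apply ex_series_scal_r. apply (ex_series_tail M); auto. }
  unfold Rdiv in *.
  replace ((S1 + R1 - (S0 + R0)) * / h - (S' + C))
    with (((S1 - S0) * / h - S') + (R1 - R0) * / h - C) by (field; auto).
  eapply Rle_lt_trans. apply Rabs_triang. eapply Rle_lt_trans.
  apply Rplus_le_compat_r. apply Rabs_triang.
  rewrite Rabs_Ropp.
  assert (Rabs ((R1 - R0) * / h) <= TM).
  { rewrite Rabs_mult, Rabs_Rinv by auto.
    apply (Rmult_le_reg_r (Rabs h)). apply Rabs_pos_lt; auto.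
    rewrite Rmult_assoc, Rinv_l by (apply Rabs_no_R0; auto). lra. }
  lra.
Qed.

Lemma smooth_series lo hi (D : nat -> nat -> R -> R) (M : nat -> nat -> R) :
  (forall k, Smooth lo hi (D k)) ->
  (forall i k z, lo < z < hi -> Rabs (D k i z) <= M i k) ->
  (forall i, ex_series (M i)) ->
  Smooth lo hi (fun i z => Series (fun k => D k i z)).
Proof.
  intros HS HM HMs i z Hz.
  apply (is_derive_series lo hi (fun k => D k i) (fun k => D k (S i)) (M (S i))); auto.
  - intros k y Hy. apply HS; auto.
  - intros y Hy. apply ex_series_bound with (M i); auto.
Qed.

Fixpoint binom (n k : nat) : R :=
  match n, k with
  | O, O => 1
  | O, S _ => 0
  | S _, O => 1
  | S n', S k' => binom n' k' + binom n' (S k')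
  end.

Lemma binom_0 n : binom n 0 = 1.
Proof. destruct n; reflexivity. Qed.

Lemma binom_gt n k : (n < k)%nat -> binom n k = 0.
Proof.
  revert k; induction n as [|n IH]; intros k Hk.
  - destruct k; [lia|reflexivity].
  - destruct k; [lia|]. simpl. rewrite !IH by lia. ring.
Qed.

Lemma binom_nonneg n k : 0 <= binom n k.
Proof.
  revert k; induction n as [|n IH]; intros k; destruct k; simpl; try lra.
  pose proof (IH k). pose proof (IH (S k)). lra.
Qed.

Lemma leibniz_sum (a b : nat -> R) i :
  sum_f_R0 (fun m => binom i m * (a (S m) * b (i - m)%nat + a m * b (S (i - m)))) i =
  sum_f_R0 (fun m => binom (S i) m * a m * b (S i - m)%nat) (S i).
Proof.
  rewrite (decomp_sum _ (S i)) by lia. simpl pred.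
  rewrite binom_0.
  replace (sum_f_R0 (fun m => binom (S i) (S m) * a (S m) * b (S i - S m)%nat) i)
    with (sum_f_R0 (fun m => binom i m * a (S m) * b (i - m)%nat) i
          + sum_f_R0 (fun m => binom i (S m) * a (S m) * b (i - m)%nat) i).
  2:{ rewrite <- sum_plus. apply sum_eq. intros m Hm. simpl. ring. }
  replace (sum_f_R0 (fun m => binom i m * (a (S m) * b (i - m)%nat + a m * b (S (i - m)))) i)
    with (sum_f_R0 (fun m => binom i m * a (S m) * b (i - m)%nat) i
          + sum_f_R0 (fun m => binom i m * a m * b (S (i - m))) i).
  2:{ rewrite <- sum_plus. apply sum_eq. intros m Hm. ring. }
  replace (1 * a 0%nat * b (S i - 0)%nat) with (a 0%nat * b (S i)) by (simpl; ring).
  destruct i as [|i].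
  - simpl. ring.
  - rewrite (decomp_sum (fun m => binom (S i) m * a m * b (S (S i - m))) (S i)) by lia.
    simpl pred. rewrite binom_0.
    rewrite (tech5 (fun m => binom (S i) (S m) * a (S m) * b (S i - m)%nat) i).
    rewrite (binom_gt (S i) (S (S i))) by lia.
    replace (S (S i - 0)) with (S (S i)) by lia.
    assert (E : sum_f_R0 (fun m => binom (S i) (S m) * a (S m) * b (S (S i - S m))) i =
                sum_f_R0 (fun m => binom (S i) (S m) * a (S m) * b (S i - m)%nat) i).
    { apply sum_eq. intros m Hm. do 3 f_equal. lia. }
    rewrite E. ring.
Qed.

Definition leib (F G : nat -> R -> R) (i : nat) (z : R) : R :=
  sum_f_R0 (fun m => binom i m * F m z * G (i - m)%nat z) i.

Lemma smooth_mult lo hi F G :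
  Smooth lo hi F -> Smooth lo hi G -> Smooth lo hi (leib F G).
Proof.
  intros HF HG i z Hz. unfold leib.
  apply isd_eq with (sum_f_R0 (fun m => binom i m * (F (S m) z * G (i - m)%nat z + F m z * G (S (i - m)) z)) i).
  - apply (isd_sum (fun m y => binom i m * F m y * G (i - m)%nat y)
                   (fun m y => binom i m * (F (S m) y * G (i - m)%nat y + F m y * G (S (i - m)) y))).
    intros k Hk.
    apply isd_eq with (binom i k * (F (S k) z * G (i - k)%nat z + F k z * G (S (i - k)) z)).
    2: reflexivity.
    apply (isd_ext (fun y => binom i k * (F k y * G (i - k)%nat y))).
    { intro; ring. }
    apply isd_scal. apply isd_mult; auto.
  - apply (leibniz_sum (fun m => F m z) (fun m => G m z)).
Qed.

Lemma binom_fact n k : (k <= n)%nat ->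
  binom n k * INR (fact k) * INR (fact (n - k)) = INR (fact n).
Proof.
  revert k; induction n as [|n IH]; intros k Hk.
  - destruct k; [simpl; ring|lia].
  - destruct k as [|k].
    + rewrite binom_0. simpl (S n - 0)%nat. simpl (fact 0). simpl INR at 1. ring.
    + simpl binom. replace (S n - S k)%nat with (n - k)%nat by lia.
      destruct (Nat.eq_dec k n) as [->|Hne].
      * rewrite (binom_gt n (S n)) by lia. rewrite Nat.sub_diag. simpl (fact 0).
        rewrite Rplus_0_r. replace (binom n n) with 1.
        { change (INR 1) with 1. ring. }
        pose proof (IH n (le_n n)). rewrite Nat.sub_diag in H. simpl (fact 0) in H.
        simpl INR in H. assert (0 < INR (fact n)) by (apply lt_0_INR, lt_O_fact).
        nra.
      * pose proof (IH k ltac:(lia)) as H1. pose proof (IH (S k) ltac:(lia)) as H2.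
        replace (n - k)%nat with (S (n - S k)) by lia.
        rewrite !fact_simpl, !mult_INR, !S_INR in *.
        replace (n - k)%nat with (S (n - S k)) in H1 by lia.
        rewrite fact_simpl, mult_INR, S_INR in H1.
        replace (INR (n - S k)) with (INR n - INR k - 1) in * by (rewrite minus_INR by lia; rewrite S_INR; ring).
        transitivity ((INR k + 1) * (binom n k * INR (fact k) * ((INR n - INR k - 1 + 1) * INR (fact (n - S k))))
           + (INR n - INR k) * (binom n (S k) * ((INR k + 1) * INR (fact k)) * INR (fact (n - S k)))).
        { ring. }
        rewrite H1, H2. ring.
Qed.

Lemma exp_le x y : x <= y -> exp x <= exp y.
Proof. intros [H|H]. left; now apply exp_increasing. right; now subst. Qed.

Lemma exp_pow x n : exp x ^ n = exp (INR n * x).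
Proof.
  induction n as [|n IH]. simpl. rewrite Rmult_0_l, exp_0. reflexivity.
  rewrite S_INR. simpl pow. rewrite IH. rewrite <- exp_plus. f_equal. ring.
Qed.

Definition Bc (i : nat) : R := (4 * INR i) ^ i.

Lemma Bc_pos i : 0 <= Bc i.
Proof. unfold Bc. apply pow_le. pose proof (pos_INR i). lra. Qed.

Lemma ln_pow_bound (L : R) i : 0 <= L -> L ^ i <= Bc i * exp (L / 4).
Proof.
  intros HL. unfold Bc. destruct i as [|i].
  - simpl. rewrite Rmult_1_l. replace 1 with (exp 0) by apply exp_0. apply exp_le. lra.
  - set (k := 4 * INR (S i)).
    assert (Hk : 0 < k) by (unfold k; rewrite S_INR; pose proof (pos_INR i); lra).
    assert (H1 : L <= k * exp (L / k)).
    { pose proof (exp_ineq1_le (L / k)).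
      replace L with (k * (L / k)) at 1 by (field; lra).
      apply Rmult_le_compat_l; lra. }
    eapply Rle_trans. apply pow_incr. split; [exact HL| exact H1].
    rewrite Rpow_mult_distr, exp_pow. right. f_equal. f_equal. unfold k. field.
    rewrite S_INR; pose proof (pos_INR i); lra.
Qed.

Definition Eterm (q : R) (n i : nat) (s : R) : R :=
  (-1) ^ n * (- ln (INR n + q)) ^ i * Rpower (INR n + q) (- s).

Lemma isd_Rpower_neg (x s : R) :
  is_derive (fun s => Rpower x (- s)) s (- ln x * Rpower x (- s)).
Proof.
  unfold Rpower.
  apply isd_eq with (- ln x * exp (- s * ln x)); [|reflexivity].
  apply isd_eq with ((- ln x) * exp (- s * ln x)); [|reflexivity].
  apply (isd_comp exp (fun s => - s * ln x)). apply is_derive_exp.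
  apply isd_eq with ((0 - 1) * ln x); [|ring].
  apply (isd_ext (fun s => (0 - s) * ln x)). intro; ring.
  apply (isd_ext (fun s => ln x * (0 - s))). intro; ring.
  apply isd_eq with (ln x * (0 - 1)); [|ring].
  apply isd_scal. apply isd_minus; [apply isd_const|apply isd_id].
Qed.

Lemma Eterm_smooth q n lo hi : Smooth lo hi (Eterm q n).
Proof.
  intros i z Hz. unfold Eterm.
  apply isd_eq with ((-1) ^ n * (- ln (INR n + q)) ^ i * (- ln (INR n + q) * Rpower (INR n + q) (- z))).
  2: simpl; ring.
  apply isd_scal. apply isd_Rpower_neg.
Qed.

Definition Zf (q : R) (i : nat) (s : R) : R := Series (fun n => Eterm q n i s).

Lemma zetaE_Zf_eq q s : Series (fun n : nat => (-1) ^ n * Rpower (INR n + q) (- s)) = Zf q 0 s.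
Proof. unfold Zf, Eterm. apply Series_ext. intro n. simpl. ring. Qed.

Lemma Eterm_bound q n i s mu :
  1 < q -> 0 <= mu -> 7/4 + mu <= s ->
  Rabs (Eterm q n i s) <= Bc i * Rpower (INR n + q) (-3/2) * Rpower q (- mu).
Proof.
  intros Hq Hmu Hs. unfold Eterm.
  pose proof (pos_INR n).
  assert (Hx : 1 <= INR n + q) by lra.
  assert (HL : 0 <= ln (INR n + q)).
  { rewrite <- ln_1. apply ln_le; lra. }
  assert (HLq : ln q <= ln (INR n + q)) by (apply ln_le; lra).
  rewrite !Rabs_mult, pow_1_abs, <- RPow_abs, Rabs_Ropp, (Rabs_right (ln _)) by lra.
  rewrite (Rabs_right (Rpower _ _)) by (left; apply exp_pos).
  rewrite Rmult_1_l.
  eapply Rle_trans.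
  apply Rmult_le_compat_r. left; apply exp_pos. apply ln_pow_bound; auto.
  unfold Rpower. rewrite Rmult_assoc, Rmult_assoc. apply Rmult_le_compat_l. apply Bc_pos.
  rewrite <- !exp_plus. apply exp_le.
  assert (0 <= ln q) by (rewrite <- ln_1; apply ln_le; lra).
  nra.
Qed.

Lemma Rpower_base_le (x y a : R) : 0 < x -> x <= y -> a <= 0 -> Rpower y a <= Rpower x a.
Proof.
  intros Hx Hxy Ha. unfold Rpower. apply exp_le.
  assert (ln x <= ln y) by (apply ln_le; lra). nra.
Qed.

Lemma pow32_tele (y : R) : 1 < y ->
  Rpower y (-3/2) <= 2 * (Rpower (y - 1) (-1/2) - Rpower y (-1/2)).
Proof.
  intros Hy.
  destruct (MVT_abs (fun t => Rpower t (-1/2)) (fun t => -1/2 * Rpower t (-1/2 - 1)) (y - 1) y)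
    as [c [Hc1 Hc2]].
  { intros c Hc. apply derivable_pt_lim_power.
    unfold Rmin in Hc. destruct (Rle_dec (y-1) y); lra. }
  unfold Rmin, Rmax in Hc2. destruct (Rle_dec (y-1) y) as [_|]; [|lra].
  replace (-1/2 - 1) with (-3/2) in Hc1 by field.
  assert (Hd : Rpower y (-1/2) <= Rpower (y-1) (-1/2)) by (apply Rpower_base_le; lra).
  rewrite Rabs_left1 in Hc1 by lra.
  replace (y - (y - 1)) with 1 in Hc1 by ring. rewrite Rabs_R1, Rmult_1_r in Hc1.
  rewrite Rabs_mult, Rabs_left1 in Hc1 by lra.
  rewrite Rabs_right in Hc1 by (left; apply exp_pos).
  assert (Rpower y (-3/2) <= Rpower c (-3/2)) by (apply Rpower_base_le; lra).
  lra.
Qed.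

Lemma S32_ex (q : R) : 1 < q -> ex_series (fun n => Rpower (INR n + q) (-3/2)).
Proof.
  intros Hq.
  set (u := fun N => sum_f_R0 (fun n => Rpower (INR n + q) (-3/2)) N).
  assert (Hb : forall N, u N <= 2 * (Rpower (q - 1) (-1/2) - Rpower (INR N + q) (-1/2))).
  { induction N as [|N IH].
    - unfold u; simpl. replace (0 + q) with q by ring. apply pow32_tele; auto.
    - unfold u in *. rewrite tech5.
      pose proof (pow32_tele (INR (S N) + q)).
      rewrite S_INR in *. replace (INR N + 1 + q - 1) with (INR N + q) in H by ring.
      pose proof (pos_INR N). specialize (H ltac:(lra)). lra. }
  destruct (growing_cv u) as [l Hl].
  - intro N. unfold u. rewrite tech5. pose proof (exp_pos ((-3/2) * ln (INR (S N) + q))). unfold Rpower. lra.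
  - exists (2 * Rpower (q - 1) (-1/2)). intros r [N ->].
    specialize (Hb N). assert (0 < Rpower (INR N + q) (-1/2)) by apply exp_pos. lra.
  - exists l. apply is_series_Reals. exact Hl.
Qed.

Definition S32 (q : R) : R := Series (fun n => Rpower (INR n + q) (-3/2)).

Lemma Rpower_q0 q : Rpower q (- 0) = 1.
Proof. unfold Rpower. replace (-0 * ln q) with 0 by ring. apply exp_0. Qed.

Lemma Z_smooth q hi : 1 < q -> Smooth (7/4) hi (Zf q).
Proof.
  intros Hq. unfold Zf.
  apply (smooth_series (7/4) hi (fun n => Eterm q n)
          (fun i n => Bc i * Rpower (INR n + q) (-3/2) * Rpower q (- 0))).
  - intro n. apply Eterm_smooth.
  - intros i n z Hz. apply Eterm_bound; lra.
  - intro i. apply ex_series_scal_r.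
    apply ex_series_ext with (fun n => scal (Bc i) (Rpower (INR n + q) (-3/2))).
    reflexivity. exact (@ex_series_scal_l R_AbsRing R_NormedModule _ _ (S32_ex q Hq)).
Qed.

Lemma Z_bound q i s mu :
  1 < q -> 0 <= mu -> 7/4 + mu <= s ->
  Rabs (Zf q i s) <= Bc i * S32 q * Rpower q (- mu).
Proof.
  intros Hq Hmu Hs. unfold Zf.
  eapply Rle_trans. apply Rabs_Series_le with (b := fun n => Bc i * Rpower (INR n + q) (-3/2) * Rpower q (- mu)).
  - intro n. apply Eterm_bound; auto.
  - apply ex_series_scal_r.
    apply ex_series_ext with (fun n => scal (Bc i) (Rpower (INR n + q) (-3/2))).
    reflexivity. exact (@ex_series_scal_l R_AbsRing R_NormedModule _ _ (S32_ex q Hq)).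
  - right. rewrite Series_scal_r, Series_scal_l. reflexivity.
Qed.

Lemma stirling1_gt n k : (n < k)%nat -> stirling1 n k = 0.
Proof.
  revert k; induction n as [|n IH]; intros k Hk.
  - destruct k; [lia|reflexivity].
  - destruct k; [lia|]. simpl. rewrite !IH by lia. ring.
Qed.

Lemma stirling1_n0 n : stirling1 (S n) 0 = 0.
Proof. reflexivity. Qed.

Lemma stirling1_bound n k : Rabs (stirling1 n k) <= INR (fact n).
Proof.
  revert k; induction n as [|n IH]; intros k.
  - destruct k; simpl; rewrite ?Rabs_R1, ?Rabs_R0; lra.
  - destruct k. simpl stirling1. rewrite Rabs_R0. apply pos_INR.
    simpl stirling1. rewrite fact_simpl, mult_INR, S_INR.
    eapply Rle_trans. apply Rabs_triang. rewrite Rabs_Ropp, Rabs_mult, (Rabs_right (INR n)) by (apply Rle_ge, pos_INR).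
    pose proof (IH k). pose proof (IH (S k)). pose proof (pos_INR n). nra.
Qed.

Fixpoint Pf (m : nat) (a : R) : R :=
  match m with O => 1 | S m' => Pf m' a * (a - INR (S m')) end.

Lemma stir_poly m a :
  sum_f_R0 (fun i => stirling1 (S m) (S i) * a ^ i) m = Pf m a.
Proof.
  induction m as [|m IH].
  - simpl. ring.
  - change (Pf (S m) a) with (Pf m a * (a - INR (S m))). rewrite <- IH.
    transitivity (sum_f_R0 (fun i => stirling1 (S m) i * a ^ i) (S m)
                  - INR (S m) * sum_f_R0 (fun i => stirling1 (S m) (S i) * a ^ i) (S m)).
    { rewrite scal_sum. rewrite <- minus_sum.
      apply sum_eq. intros i Hi. change (stirling1 (S (S m)) (S i)) with
        (stirling1 (S m) i - INR (S m) * stirling1 (S m) (S i)). ring. }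
    rewrite (decomp_sum _ (S m)) by lia. simpl pred. rewrite stirling1_n0.
    rewrite tech5. rewrite (stirling1_gt (S m) (S (S m))) by lia.
    replace (sum_f_R0 (fun i => stirling1 (S m) (S i) * a ^ S i) m)
      with (a * sum_f_R0 (fun i => stirling1 (S m) (S i) * a ^ i) m)
      by (rewrite scal_sum; apply sum_eq; intros; simpl; ring).
    ring.
Qed.

Definition mono (i p : nat) (a : R) : R :=
  if (p <=? i)%nat then INR (fact i) / INR (fact (i - p)) * a ^ (i - p) else 0.

Lemma mono_smooth i lo hi : Smooth lo hi (mono i).
Proof.
  intros p a _. unfold mono.
  destruct (Nat.leb_spec p i) as [H1|H1]; destruct (Nat.leb_spec (S p) i) as [H2|H2]; try lia.
  - apply isd_eq with (INR (fact i) / INR (fact (i - p)) * (INR (i - p) * a ^ pred (i - p))).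
    + apply isd_scal. apply is_derive_Reals. apply derivable_pt_lim_pow.
    + replace (i - p)%nat with (S (i - S p)) by lia. simpl pred.
      rewrite fact_simpl, mult_INR. field. split; apply not_0_INR; try lia. apply fact_neq_0.
  - assert (p = i) by lia. subst. rewrite Nat.sub_diag. simpl pow.
    apply isd_eq with 0; [|reflexivity].
    apply (isd_ext (fun _ => INR (fact i) / INR (fact 0) * 1)). intro; reflexivity.
    apply isd_const.
  - apply isd_const.
Qed.

Definition polyF (e : nat -> R) (m p : nat) (a : R) : R :=
  sum_f_R0 (fun i => e i * mono i p a) m.

Lemma polyF_smooth e m lo hi : Smooth lo hi (polyF e m).
Proof.
  intros p a Ha. unfold polyF.
  apply (isd_sum (fun i a => e i * mono i p a) (fun i a => e i * mono i (S p) a)).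
  intros k _. apply isd_scal. apply (mono_smooth k lo hi); auto.
Qed.

Lemma ffac_le i p : (p <= i)%nat -> INR (fact i) <= INR i ^ p * INR (fact (i - p)).
Proof.
  induction p as [|p IH]; intros H.
  - rewrite Nat.sub_0_r. simpl; lra.
  - eapply Rle_trans. apply IH; lia.
    replace (i - p)%nat with (S (i - S p)) by lia.
    rewrite fact_simpl, mult_INR. simpl pow.
    assert (INR (S (i - S p)) <= INR i) by (apply le_INR; lia).
    pose proof (pos_INR (fact (i - S p))). pose proof (pow_le (INR i) p (pos_INR i)).
    replace (INR i ^ p * (INR (S (i - S p)) * INR (fact (i - S p))))
      with ((INR i ^ p * INR (fact (i - S p))) * INR (S (i - S p))) by ring.
    replace (INR i * INR i ^ p * INR (fact (i - S p)))
      with ((INR i ^ p * INR (fact (i - S p))) * INR i) by ring.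
    apply Rmult_le_compat_l; auto. apply Rmult_le_pos; auto.
Qed.

Lemma pow_abs_le1 a n : Rabs a <= 1 -> Rabs (a ^ n) <= 1.
Proof.
  intros H. rewrite <- RPow_abs. rewrite <- (pow1 n). apply pow_incr. split; auto. apply Rabs_pos.
Qed.

Lemma mono_bound i p a : Rabs a <= 1 -> Rabs (mono i p a) <= INR i ^ p.
Proof.
  intros Ha. unfold mono. destruct (Nat.leb_spec p i) as [H|H].
  - rewrite Rabs_mult. pose proof (pow_abs_le1 a (i - p) Ha).
    assert (Hf : 0 < INR (fact (i - p))) by (apply lt_0_INR, lt_O_fact).
    rewrite Rabs_right by (apply Rle_ge; apply Rmult_le_pos; [apply pos_INR| left; apply Rinv_0_lt_compat; auto]).
    pose proof (ffac_le i p H).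
    assert (INR (fact i) / INR (fact (i - p)) <= INR i ^ p).
    { apply (Rmult_le_reg_r (INR (fact (i - p)))); auto. unfold Rdiv. rewrite Rmult_assoc, Rinv_l by lra. lra. }
    assert (0 <= INR (fact i) / INR (fact (i - p))).
    { unfold Rdiv. apply Rmult_le_pos. apply pos_INR. left; apply Rinv_0_lt_compat; auto. }
    pose proof (Rabs_pos (a ^ (i - p))). nra.
  - rewrite Rabs_R0. apply pow_le, pos_INR.
Qed.

Lemma polyF_bound e m p a :
  (forall i, Rabs (e i) <= 1) -> Rabs a <= 1 -> Rabs (polyF e m p a) <= (INR m + 1) ^ (S p).
Proof.
  intros He Ha. unfold polyF.
  eapply Rle_trans. apply sum_f_R0_triangle.
  eapply Rle_trans. apply sum_Rle with (Bn := fun _ => INR m ^ p).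
  { intros i Hi. rewrite Rabs_mult. pose proof (He i). pose proof (mono_bound i p a Ha).
    pose proof (Rabs_pos (e i)). pose proof (Rabs_pos (mono i p a)).
    assert (INR i ^ p <= INR m ^ p) by (apply pow_incr; split; [apply pos_INR| apply le_INR; lia]).
    nra. }
  rewrite sum_cte. simpl pow. rewrite S_INR.
  pose proof (pos_INR m).
  rewrite Rmult_comm. apply Rmult_le_compat_l. lra. apply pow_incr. lra.
Qed.

Lemma mono_at0 i p : mono i p 0 = if Nat.eqb i p then INR (fact p) else 0.
Proof.
  unfold mono. destruct (Nat.eqb i p) eqn:E.
  - apply Nat.eqb_eq in E. subst. rewrite Nat.leb_refl, Nat.sub_diag. simpl.
    assert (INR (fact p) <> 0) by (apply not_0_INR, fact_neq_0). field. auto.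
  - apply Nat.eqb_neq in E. destruct (Nat.leb_spec p i); [|reflexivity].
    replace (i - p)%nat with (S (i - S p)) by lia. simpl. ring.
Qed.

Lemma sum_single (f : nat -> R) m p :
  (forall i, i <> p -> f i = 0) -> sum_f_R0 f m = if (p <=? m)%nat then f p else 0.
Proof.
  intros H. induction m as [|m IH].
  - simpl. destruct (Nat.leb_spec p 0). replace p with 0%nat by lia. reflexivity. apply H; lia.
  - rewrite tech5, IH. destruct (Nat.leb_spec p m); destruct (Nat.leb_spec p (S m)); try lia.
    + rewrite (H (S m)) by lia. ring.
    + replace p with (S m) by lia. ring.
    + rewrite (H (S m)) by lia. ring.
Qed.

Definition ecoef (m i : nat) : R := stirling1 (S m) (S i) / INR (fact (S m)).

Lemma ecoef_bound m i : Rabs (ecoef m i) <= 1.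
Proof.
  unfold ecoef. unfold Rdiv. rewrite Rabs_mult.
  assert (Hf : 0 < INR (fact (S m))) by (apply lt_0_INR, lt_O_fact).
  rewrite Rabs_Rinv, (Rabs_right (INR _)) by lra.
  pose proof (stirling1_bound (S m) (S i)).
  apply (Rmult_le_reg_r (INR (fact (S m)))); auto.
  rewrite Rmult_assoc, Rinv_l by lra. lra.
Qed.

Lemma polyF_at0 m p : polyF (ecoef m) m p 0 = ecoef m p * INR (fact p).
Proof.
  unfold polyF. rewrite (sum_single _ m p).
  - rewrite mono_at0, Nat.eqb_refl. destruct (Nat.leb_spec p m). reflexivity.
    unfold ecoef. rewrite stirling1_gt by lia. unfold Rdiv. ring.
  - intros i Hi. rewrite mono_at0. destruct (Nat.eqb_spec i p). lia. ring.
Qed.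

Lemma polyF_0 m a : polyF (ecoef m) m 0 a = Pf m a / INR (fact (S m)).
Proof.
  rewrite <- stir_poly. unfold polyF, ecoef, Rdiv. rewrite Rmult_comm, scal_sum. apply sum_eq.
  intros i _. unfold mono. destruct (Nat.leb_spec 0 i); [|lia]. rewrite Nat.sub_0_r.
  field. split; apply not_0_INR, fact_neq_0.
Qed.

Definition Phi (a y : R) : R :=
  if Req_EM_T a 0 then ln y else (Rpower y a - 1) / a.

Lemma Rpower_0r y : Rpower y 0 = 1.
Proof. unfold Rpower. rewrite Rmult_0_l. apply exp_0. Qed.

Lemma Phi_derive a y : 0 < y -> is_derive (Phi a) y (Rpower y (a - 1)).
Proof.
  intros Hy. unfold Phi. destruct (Req_EM_T a 0) as [->|Ha].
  - apply is_derive_Reals. replace (Rpower y (0 - 1)) with (/ y).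
    apply derivable_pt_lim_ln; auto.
    replace (0 - 1) with (- (1)) by ring. rewrite Rpower_Ropp, Rpower_1; auto.
  - apply isd_eq with (/ a * (a * Rpower y (a - 1))).
    + apply (isd_ext (fun y => / a * (Rpower y a - 1))). intro; unfold Rdiv; ring.
      apply isd_scal. apply isd_eq with (a * Rpower y (a - 1) - 0); [|ring].
      apply isd_minus. apply is_derive_Reals, derivable_pt_lim_power; auto. apply isd_const.
    + field; auto.
Qed.

Lemma Phi_mult a u v : 0 < u -> 0 < v -> Phi a (u * v) = Phi a u + Rpower u a * Phi a v.
Proof.
  intros Hu Hv. unfold Phi. destruct (Req_EM_T a 0) as [->|Ha].
  - rewrite ln_mult, Rpower_0r by auto. ring.
  - rewrite <- Rpower_mult_distr by auto. field; auto.
Qed.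

Lemma Phi_1 a : Phi a 1 = 0.
Proof.
  unfold Phi. destruct (Req_EM_T a 0). apply ln_1.
  unfold Rpower. rewrite ln_1, Rmult_0_r, exp_0. unfold Rdiv; ring.
Qed.

Lemma Phi_ode a y : 0 < y -> y * Rpower y (a - 1) = 1 + a * Phi a y.
Proof.
  intros Hy. unfold Phi. 
  assert (E : y * Rpower y (a - 1) = Rpower y a).
  { unfold Rpower. transitivity (exp (ln y) * exp ((a - 1) * ln y)).
    rewrite exp_ln; auto. rewrite <- exp_plus. f_equal. ring. }
  rewrite E.
  destruct (Req_EM_T a 0) as [->|Ha].
  - rewrite Rpower_0r. ring.
  - field; auto.
Qed.

Lemma Phi_step_bound a y : a <= 1 -> 0 < y -> Rabs (Phi a (y + 1) - Phi a y) <= Rpower y (a - 1).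
Proof.
  intros Ha Hy.
  destruct (MVT_abs (Phi a) (fun t => Rpower t (a - 1)) y (y + 1)) as [c [Hc1 Hc2]].
  { intros c Hc. apply is_derive_Reals. apply Phi_derive.
    unfold Rmin in Hc. destruct (Rle_dec y (y+1)); lra. }
  rewrite Hc1. replace (y + 1 - y) with 1 by ring. rewrite Rabs_R1, Rmult_1_r.
  rewrite Rabs_right by (left; apply exp_pos).
  unfold Rmin, Rmax in Hc2. destruct (Rle_dec y (y+1)); [|lra].
  apply Rpower_base_le; lra.
Qed.

Definition dcoef (a : R) (m : nat) : R := Pf m a / INR (fact (S m)).

Lemma Pf_nz m a : a < 1 -> Pf m a <> 0.
Proof.
  intros Ha. induction m as [|m IH]. simpl; lra.
  change (Pf (S m) a) with (Pf m a * (a - INR (S m))).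
  apply Rmult_integral_contrapositive. split; auto.
  rewrite S_INR. pose proof (pos_INR m). lra.
Qed.

Lemma dcoef_nz a m : a < 1 -> dcoef a m <> 0.
Proof.
  intros Ha. unfold dcoef. unfold Rdiv. apply Rmult_integral_contrapositive. split.
  now apply Pf_nz. apply Rinv_neq_0_compat, not_0_INR, fact_neq_0.
Qed.

Lemma dcoef_0 a : dcoef a 0 = 1.
Proof. unfold dcoef. simpl. field. Qed.

Lemma dcoef_rec a m : INR (S (S m)) * dcoef a (S m) = (a - INR (S m)) * dcoef a m.
Proof.
  unfold dcoef. change (Pf (S m) a) with (Pf m a * (a - INR (S m))).
  rewrite (fact_simpl (S m)), mult_INR.
  field. split; [apply not_0_INR, fact_neq_0| apply not_0_INR; lia].
Qed.

Lemma lim_c_over (c : R) : is_lim_seq (fun n => c / (INR n + 2)) 0.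
Proof.
  assert (H : is_lim_seq (fun n => INR n + 2) p_infty).
  { apply (is_lim_seq_plus _ _ p_infty 2 p_infty). apply is_lim_seq_INR.
    apply is_lim_seq_const. simpl. reflexivity. }
  apply is_lim_seq_inv in H; [|discriminate].
  apply (is_lim_seq_scal_l _ c) in H. simpl in H. rewrite Rmult_0_r in H.
  apply is_lim_seq_ext with (2 := H). intro n. unfold Rdiv. reflexivity.
Qed.

Lemma dcoef_radius a : a < 1 -> CV_radius (dcoef a) = 1.
Proof.
  intros Ha. replace 1 with (/ 1) by field.
  apply CV_radius_finite_DAlembert. intro; apply dcoef_nz; auto. lra.
  apply is_lim_seq_ext with (fun n => 1 - (1 + a) / (INR n + 2)).
  - intro n. 
    assert (E : dcoef a (S n) = (a - INR (S n)) * dcoef a n / INR (S (S n))).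
    { rewrite <- dcoef_rec. field. apply not_0_INR; lia. }
    rewrite E. pose proof (dcoef_nz a n Ha).
    replace ((a - INR (S n)) * dcoef a n / INR (S (S n)) / dcoef a n)
      with ((a - INR (S n)) / INR (S (S n))) by (field; split; auto; apply not_0_INR; lia).
    rewrite !S_INR. pose proof (pos_INR n).
    rewrite Rabs_left1. field. lra. 
    unfold Rdiv. apply Rmult_le_0_r. lra. left; apply Rinv_0_lt_compat; lra.
  - pose proof (is_lim_seq_minus' _ _ 1 0 (is_lim_seq_const 1) (lim_c_over (1 + a))) as H.
    rewrite Rminus_0_r in H. exact H.
Qed.

Lemma ex_pseries_R (c : nat -> R) x : ex_pseries c x -> ex_series (fun k => c k * x ^ k).
Proof.
  intros H. apply ex_series_ext with (2 := H). intro k.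
  rewrite pow_n_pow. unfold scal; simpl; unfold mult; simpl. ring.
Qed.

Lemma is_pseries_R (c : nat -> R) x l : is_pseries c x l -> is_series (fun k => c k * x ^ k) l.
Proof.
  intros H. apply is_series_ext with (2 := H). intro k.
  rewrite pow_n_pow. unfold scal; simpl; unfold mult; simpl. ring.
Qed.

Section Binom.
Variable a : R.
Hypothesis Ha : a < 1.

Let d := dcoef a.
Let f := PSeries (PS_incr_1 d).
Let D := PSeries (PS_derive (PS_incr_1 d)).

Lemma rad_ok t : -1 < t < 1 -> Rbar_lt (Rabs t) (CV_radius (PS_incr_1 d)).
Proof.
  intros Ht. rewrite CV_radius_incr_1. unfold d. rewrite dcoef_radius by auto.
  simpl. apply Rabs_def1; lra.
Qed.

Lemma rad_ok' t : -1 < t < 1 -> Rbar_lt (Rabs t) (CV_radius d).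
Proof. intros Ht. pose proof (rad_ok t Ht). rewrite CV_radius_incr_1 in H. exact H. Qed.

Lemma f_derive t : -1 < t < 1 -> is_derive f t (D t).
Proof. intros Ht. apply is_derive_PSeries. now apply rad_ok. Qed.

Lemma ode_f t : -1 < t < 1 -> (1 + t) * D t = 1 + a * f t.
Proof.
  intros Ht.
  assert (ED : ex_series (fun k => INR (S k) * d k * t ^ k)).
  { pose proof (ex_pseries_R _ _ (ex_pseries_derive _ _ (rad_ok t Ht))) as H.
    apply ex_series_ext with (2 := H). intro k. reflexivity. }
  assert (EA : ex_series (fun k => d k * t ^ k)).
  { apply ex_pseries_R. apply CV_radius_inside. now apply rad_ok'. }
  assert (HD : D t = Series (fun k => INR (S k) * d k * t ^ k)).
  { unfold D, PSeries. apply Series_ext. intro k. reflexivity. }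
  assert (Hf : f t = t * Series (fun k => d k * t ^ k)).
  { unfold f. rewrite PSeries_incr_1. reflexivity. }
  assert (S1 : D t = 1 + Series (fun k => INR (S (S k)) * d (S k) * t ^ (S k))).
  { rewrite HD, Series_incr_1 by auto. unfold d. rewrite dcoef_0. simpl. ring. }
  assert (S2 : t * D t = Series (fun k => INR (S k) * d k * t ^ (S k))).
  { rewrite HD, <- Series_scal_l. apply Series_ext. intro k. simpl. ring. }
  assert (S3 : a * f t = Series (fun k => a * d k * t ^ (S k))).
  { rewrite Hf, <- Series_scal_l, <- Series_scal_l. apply Series_ext. intro k. simpl. ring. }
  assert (E1 : ex_series (fun k => INR (S k) * d k * t ^ (S k))).
  { apply ex_series_ext with (fun k => (INR (S k) * d k * t ^ k) * t).
    intro k; simpl; ring. apply ex_series_scal_r; auto. }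
  assert (E2 : ex_series (fun k => a * d k * t ^ (S k))).
  { apply ex_series_ext with (fun k => (d k * t ^ k) * (a * t)).
    intro k; simpl; ring. apply ex_series_scal_r; auto. }
  assert (S4 : t * D t - a * f t = - Series (fun k => INR (S (S k)) * d (S k) * t ^ (S k))).
  { rewrite S2, S3, <- Series_minus by auto.
    transitivity (-1 * Series (fun k => INR (S (S k)) * d (S k) * t ^ (S k))); [|ring].
    rewrite <- Series_scal_l.
    apply Series_ext. intro k.
    replace (INR (S k) * d k * t ^ S k - a * d k * t ^ S k)
      with (- ((a - INR (S k)) * d k) * t ^ S k) by ring.
    unfold d. rewrite <- dcoef_rec. ring. }
  replace ((1 + t) * D t) with (D t + (t * D t - a * f t) + a * f t) by ring.
  rewrite S4, S1. ring.
Qed.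

Lemma Rpower_derive_t b s : -1 < s -> is_derive (fun s => Rpower (1 + s) b) s (b * Rpower (1 + s) (b - 1)).
Proof.
  intros Hs.
  apply isd_eq with (1 * (b * Rpower (1 + s) (b - 1))); [|ring].
  apply (isd_comp (fun y => Rpower y b) (fun s => 1 + s)).
  apply is_derive_Reals, derivable_pt_lim_power. lra.
  apply isd_eq with (0 + 1); [|ring]. apply isd_plus; [apply isd_const|apply isd_id].
Qed.

Lemma binom_Phi t : -1 < t < 1 -> f t = Phi a (1 + t).
Proof.
  intros Ht.
  set (v := fun s => (f s - Phi a (1 + s)) * Rpower (1 + s) (- a)).
  assert (Hv : forall s, -1 < s < 1 -> is_derive v s 0).
  { intros s Hs. unfold v.
    apply isd_eq with ((D s - 1 * Rpower (1 + s) (a - 1)) * Rpower (1 + s) (- a)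
                       + (f s - Phi a (1 + s)) * (- a * Rpower (1 + s) (- a - 1))).
    - apply (isd_mult (fun s => f s - Phi a (1 + s)) (fun s => Rpower (1 + s) (- a))).
      + apply isd_minus. apply f_derive; auto.
        apply (isd_comp (Phi a) (fun s => 1 + s)). apply Phi_derive; lra.
        apply isd_eq with (0 + 1); [|ring]. apply isd_plus; [apply isd_const|apply isd_id].
      + apply Rpower_derive_t; lra.
    - assert (Hy : 0 < 1 + s) by lra.
      assert (E : Rpower (1 + s) (- a) = (1 + s) * Rpower (1 + s) (- a - 1)).
      { unfold Rpower. transitivity (exp (ln (1 + s)) * exp ((- a - 1) * ln (1 + s))).
        rewrite <- exp_plus. f_equal. ring. rewrite exp_ln; auto. }
      rewrite E. pose proof (ode_f s Hs). pose proof (Phi_ode a (1 + s) Hy).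
      transitivity (Rpower (1 + s) (- a - 1) *
        (((1 + s) * D s) - (1 + s) * Rpower (1 + s) (a - 1) - a * (f s - Phi a (1 + s)))).
      ring. rewrite H, H0. ring. }
  destruct (MVT_abs v (fun _ => 0) 0 t) as [c [Hc1 Hc2]].
  { intros c Hc. apply is_derive_Reals. apply Hv.
    unfold Rmin, Rmax in Hc. destruct (Rle_dec 0 t); lra. }
  rewrite Rabs_R0, Rmult_0_l in Hc1.
  assert (Hv0 : v 0 = 0).
  { unfold v, f. rewrite PSeries_0. simpl. rewrite Rplus_0_r, Phi_1. change (zero : R) with 0. ring. }
  rewrite Hv0, Rminus_0_r in Hc1. apply Rabs_eq_0 in Hc1.
  unfold v in Hc1. apply Rmult_integral in Hc1. destruct Hc1 as [H|H]. lra.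
  pose proof (exp_pos (- a * ln (1 + t))). unfold Rpower in H. lra.
Qed.

Lemma binom_series t : -1 < t < 1 ->
  is_series (fun m => dcoef a m * t ^ (S m)) (Phi a (1 + t)).
Proof.
  intros Ht. rewrite <- binom_Phi by auto. unfold f. rewrite PSeries_incr_1.
  assert (EA : ex_series (fun k => d k * t ^ k)).
  { apply ex_pseries_R. apply CV_radius_inside. now apply rad_ok'. }
  pose proof (is_series_scal_r t _ _ (Series_correct _ EA)) as H.
  rewrite Rmult_comm. apply is_series_ext with (2 := H). intro k. unfold d. simpl. ring.
Qed.

End Binom.

Lemma sum_even (tau : nat -> R) K :
  (forall k, tau (S (2 * k)) = 0) ->
  sum_f_R0 tau (2 * K) = sum_f_R0 (fun k => tau (2 * k)%nat) K.
Proof.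
  intros H. induction K as [|K IH]. reflexivity.
  replace (2 * S K)%nat with (S (S (2 * K))) by lia.
  rewrite tech5, tech5, IH, H, tech5. replace (S (S (2 * K))) with (2 * S K)%nat by lia. ring.
Qed.

Lemma is_series_even (tau : nat -> R) l :
  (forall k, tau (S (2 * k)) = 0) -> is_series tau l -> is_series (fun k => tau (2 * k)%nat) l.
Proof.
  intros H Hs. apply is_series_Reals in Hs. apply is_series_Reals.
  intros eps Heps. destruct (Hs eps Heps) as [N HN]. exists N. intros n Hn.
  rewrite <- sum_even by auto. apply HN. lia.
Qed.

Lemma Rpower_inv_pow x a n : 0 < x -> Rpower x a * (/ x) ^ n = Rpower x (a - INR n).
Proof.
  intros Hx. rewrite <- Rinv_pow by lra. rewrite <- Rpower_pow by auto.
  rewrite <- Rpower_Ropp. unfold Rminus. rewrite Rpower_plus. reflexivity.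
Qed.

Lemma neg_pow (y : R) n : (- y) ^ n = (-1) ^ n * y ^ n.
Proof. rewrite <- Rpow_mult_distr. f_equal. ring. Qed.

Lemma inv_lt1 x : 1 < x -> 0 < / x < 1.
Proof.
  intros H. split. apply Rinv_0_lt_compat; lra.
  rewrite <- Rinv_1. apply Rinv_lt_contravar; lra.
Qed.

Lemma perN_2 z x : 0 < z -> 1 < x ->
  is_series (fun k => dcoef (1 - z) (2 * S k) * Rpower x (- (z + INR (2 * S k))))
            (/ 2 * (Phi (1 - z) (x + 1) - Phi (1 - z) (x - 1)) - Rpower x (- z)).
Proof.
  intros Hz Hx. set (a := 1 - z).
  assert (Ha : a < 1) by (unfold a; lra).
  pose proof (inv_lt1 x Hx) as Hi.
  assert (Ht1 : -1 < / x < 1) by lra.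
  assert (Ht2 : -1 < - / x < 1) by lra.
  pose proof (binom_series a Ha _ Ht1) as B1.
  pose proof (binom_series a Ha _ Ht2) as B2.
  assert (E : Phi a (x + 1) - Phi a (x - 1) = Rpower x a * (Phi a (1 + / x) - Phi a (1 + - / x))).
  { replace (x + 1) with (x * (1 + / x)) by (field; lra).
    replace (x - 1) with (x * (1 + - / x)) by (field; lra).
    rewrite !Phi_mult; lra. }
  pose proof (is_series_minus _ _ _ _ B1 B2) as B3.
  pose proof (is_series_scal_l (Rpower x a) _ _ B3) as B4.
  set (tau := fun m => Rpower x a * (dcoef a m * (/ x) ^ S m - dcoef a m * (- / x) ^ S m)).
  assert (B5 : is_series tau (Phi a (x + 1) - Phi a (x - 1))).
  { rewrite E. apply is_series_ext with (2 := B4). intro m. reflexivity. }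
  assert (Hodd : forall k, tau (S (2 * k)) = 0).
  { intro k. unfold tau. rewrite neg_pow. replace (S (S (2 * k))) with (2 * (S k))%nat by lia.
    rewrite pow_1_even. ring. }
  pose proof (is_series_even tau _ Hodd B5) as B6.
  pose proof (is_series_scal_l (/ 2) _ _ B6) as B7.
  assert (B8 : is_series (fun k => dcoef a (2 * k) * Rpower x (a - INR (S (2 * k))))
                         (/ 2 * (Phi a (x + 1) - Phi a (x - 1)))).
  { apply is_series_ext with (2 := B7). intro k. unfold tau.
    rewrite neg_pow, pow_1_odd. rewrite <- (Rpower_inv_pow x a (S (2 * k))) by lra.
    change (scal (/ 2) (Rpower x a * (dcoef a (2 * k) * (/ x) ^ S (2 * k) -
       dcoef a (2 * k) * (-1 * (/ x) ^ S (2 * k)))) =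
       dcoef a (2 * k) * (Rpower x a * (/ x) ^ S (2 * k))).
    unfold scal; simpl; unfold mult; simpl. field. lra. }
  apply (is_series_ext (fun k => dcoef a (2 * S k) * Rpower x (a - INR (S (2 * S k))))).
  { intro k. f_equal. f_equal. unfold a. rewrite S_INR. ring. }
  apply (is_series_incr_1 (fun k => dcoef a (2 * k) * Rpower x (a - INR (S (2 * k))))).
  match goal with |- is_series _ ?l => replace l with (/ 2 * (Phi a (x + 1) - Phi a (x - 1))) end.
  exact B8.
  change (2 * 0)%nat with 0%nat. rewrite dcoef_0. simpl INR.
  replace (a - 1) with (- z) by (unfold a; ring).
  change (plus ?u ?v) with (u + v). ring.
Qed.

Lemma perN_1 z x : 0 < z -> 2 < x ->
  is_series (fun k => (-1) ^ S k * 2 ^ S k * dcoef (1 - z) (S k) * Rpower x (- (z + INR (S k))))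
            (/ 2 * (Phi (1 - z) x - Phi (1 - z) (x - 2)) - Rpower x (- z)).
Proof.
  intros Hz Hx. set (a := 1 - z).
  assert (Ha : a < 1) by (unfold a; lra).
  assert (Hi : 0 < / x < / 2).
  { split. apply Rinv_0_lt_compat; lra. apply Rinv_lt_contravar; lra. }
  assert (Ht : -1 < - 2 * / x < 1) by lra.
  pose proof (binom_series a Ha _ Ht) as B1.
  assert (E : Phi a x - Phi a (x - 2) = - Rpower x a * Phi a (1 + - 2 * / x)).
  { replace (x - 2) with (x * (1 + - 2 * / x)) by (field; lra).
    rewrite Phi_mult; try lra. }
  pose proof (is_series_scal_l (- Rpower x a) _ _ B1) as B2.
  pose proof (is_series_scal_l (/ 2) _ _ B2) as B3.
  assert (B4 : is_series (fun m => (-1) ^ m * 2 ^ m * dcoef a m * Rpower x (a - INR (S m)))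
                         (/ 2 * (Phi a x - Phi a (x - 2)))).
  { rewrite E. apply is_series_ext with (2 := B3). intro m.
    rewrite <- (Rpower_inv_pow x a (S m)) by lra.
    change (scal (/ 2) (scal (- Rpower x a) (dcoef a m * (- 2 * / x) ^ S m)) =
            (-1) ^ m * 2 ^ m * dcoef a m * (Rpower x a * (/ x) ^ S m)).
    unfold scal; simpl; unfold mult; simpl.
    replace (- 2 * / x) with ((-1) * (2 * / x)) by ring.
    rewrite !Rpow_mult_distr. simpl. field. lra. }
  apply (is_series_ext (fun k => (-1) ^ S k * 2 ^ S k * dcoef a (S k) * Rpower x (a - INR (S (S k))))).
  { intro k. f_equal. f_equal. unfold a. rewrite S_INR. ring. }
  apply (is_series_incr_1 (fun m => (-1) ^ m * 2 ^ m * dcoef a m * Rpower x (a - INR (S m)))).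
  match goal with |- is_series _ ?l => replace l with (/ 2 * (Phi a x - Phi a (x - 2))) end.
  exact B4.
  rewrite dcoef_0. simpl INR.
  replace (a - 1) with (- z) by (unfold a; ring).
  change (plus ?u ?v) with (u + v). simpl. ring.
Qed.

Lemma tail_lim (M : nat -> R) : ex_series M ->
  forall eps, 0 < eps -> exists N0, forall N, (N0 <= N)%nat -> Rabs (Series (fun k => M (S N + k)%nat)) < eps.
Proof.
  intros H eps He. pose proof (Series_correct _ H) as Hs.
  apply is_series_Reals in Hs. destruct (Hs eps He) as [N0 HN]. exists N0. intros N HN0.
  specialize (HN N HN0). unfold Rdist in HN.
  rewrite (Series_tail M N H) in HN.
  replace (sum_f_R0 M N - (sum_f_R0 M N + Series (fun k : nat => M (S N + k)%nat)))
    with (- Series (fun k : nat => M (S N + k)%nat)) in HN by ring.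
  rewrite Rabs_Ropp in HN. exact HN.
Qed.

Lemma ex_series_plus_R (a b : nat -> R) : ex_series a -> ex_series b -> ex_series (fun n => a n + b n).
Proof. intros Ha Hb. exact (@ex_series_plus R_AbsRing R_NormedModule a b Ha Hb). Qed.

Lemma sum_Series (c : nat -> R) (G : nat -> nat -> R) N :
  (forall n, ex_series (G n)) ->
  ex_series (fun k => sum_f_R0 (fun n => c n * G n k) N) /\
  sum_f_R0 (fun n => c n * Series (G n)) N = Series (fun k => sum_f_R0 (fun n => c n * G n k) N).
Proof.
  intros H. induction N as [|N [IH1 IH2]].
  - simpl. split. apply ex_series_ext with (fun k => scal (c 0%nat) (G 0%nat k)). reflexivity.
    exact (@ex_series_scal_l R_AbsRing R_NormedModule _ _ (H 0%nat)).
    rewrite Series_scal_l. reflexivity.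
  - assert (E : ex_series (fun k => c (S N) * G (S N) k)).
    { apply ex_series_ext with (fun k => scal (c (S N)) (G (S N) k)). reflexivity.
      exact (@ex_series_scal_l R_AbsRing R_NormedModule _ _ (H (S N))). }
    split.
    + simpl. apply ex_series_plus_R; auto.
    + simpl. rewrite IH2, <- Series_scal_l, <- Series_plus; auto.
Qed.

Lemma telescope (phi : nat -> R) N :
  sum_f_R0 (fun n => (-1) ^ n * (phi (S (S n)) - phi n)) N
  = phi 1%nat - phi 0%nat + (-1) ^ N * (phi (S (S N)) - phi (S N)).
Proof.
  induction N as [|N IH]. simpl. ring.
  rewrite tech5, IH. simpl. ring.
Qed.

Lemma Rpower_small c0 z : 0 < c0 -> 3/4 <= z ->
  forall eps, 0 < eps -> exists N0, forall N, (N0 <= N)%nat -> Rpower (c0 + INR (S N)) (- z) < eps.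
Proof.
  intros Hc Hz eps He.
  pose proof (ex_series_lim_0 _ (S32_ex (c0 + 1) ltac:(lra))) as H.
  apply is_lim_seq_Reals in H. destruct (H (eps * eps)) as [N0 HN]. nra.
  exists N0. intros N HN0. specialize (HN N HN0). unfold Rdist in HN.
  rewrite Rminus_0_r, Rabs_right in HN by (left; apply exp_pos).
  rewrite S_INR.
  assert (Hy : 1 <= c0 + (INR N + 1)) by (pose proof (pos_INR N); lra).
  eapply Rle_lt_trans. apply Rle_Rpower with (m := -3/4). lra. lra.
  replace (INR N + (c0 + 1)) with (c0 + (INR N + 1)) in HN by ring.
  assert (E : Rpower (c0 + (INR N + 1)) (-3/2) = Rpower (c0 + (INR N + 1)) (-3/4) * Rpower (c0 + (INR N + 1)) (-3/4)).
  { rewrite <- Rpower_plus. f_equal. field. }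
  rewrite E in HN. pose proof (exp_pos (-3/4 * ln (c0 + (INR N + 1)))). unfold Rpower in *. nra.
Qed.

Lemma Bc_0 : Bc 0 = 1.
Proof. reflexivity. Qed.

Lemma Eterm_ex q s : 1 < q -> 7/4 <= s -> ex_series (fun n => Eterm q n 0 s).
Proof.
  intros Hq Hs. apply ex_series_bound with (fun n => Bc 0 * Rpower (INR n + q) (-3/2) * Rpower q (- 0)).
  intro n. apply Eterm_bound; lra.
  apply ex_series_scal_r.
  apply ex_series_ext with (fun n => scal (Bc 0) (Rpower (INR n + q) (-3/2))). reflexivity.
  exact (@ex_series_scal_l R_AbsRing R_NormedModule _ _ (S32_ex q Hq)).
Qed.

Lemma tl_bound q N s mu : 1 < q -> 0 <= mu -> 7/4 + mu <= s ->
  Rabs (Series (fun j => Eterm q (S N + j) 0 s)) <=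
  Series (fun j => Rpower (INR (S N + j) + q) (-3/2)) * Rpower q (- mu).
Proof.
  intros Hq Hmu Hs.
  rewrite <- Series_scal_r. apply Rabs_Series_le.
  - intro j. pose proof (Eterm_bound q (S N + j) 0 s mu Hq Hmu Hs). rewrite Bc_0 in H. lra.
  - apply ex_series_scal_r. apply (ex_series_tail (fun n => Rpower (INR n + q) (-3/2))). apply S32_ex; auto.
Qed.

Lemma zeta_identity q c0 (W mu : nat -> R) z :
  1 < q -> 0 < c0 -> 3/4 < z -> (forall k, 1 <= mu k) ->
  ex_series (fun k => Rabs (W k) * Rpower q (- (mu k - 1))) ->
  (forall n, is_series (fun k => W k * Rpower (INR n + q) (- (z + mu k)))
     (/ 2 * (Phi (1 - z) (c0 + INR (S (S n))) - Phi (1 - z) (c0 + INR n)) - Rpower (INR n + q) (- z))) ->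
  zetaE z q = / 2 * (Phi (1 - z) (c0 + 1) - Phi (1 - z) c0) - Series (fun k => W k * Zf q 0 (z + mu k)).
Proof.
  intros Hq Hc Hz Hmu HK Hper.
  set (a := 1 - z) in *.
  set (phi := fun j : nat => Phi a (c0 + INR j)).
  set (G := fun n k => W k * Rpower (INR n + q) (- (z + mu k))).
  set (K := Series (fun k => Rabs (W k) * Rpower q (- (mu k - 1)))).
  assert (HKnn : 0 <= K).
  { apply Series_nonneg; auto. intro k. apply Rmult_le_pos. apply Rabs_pos. left; apply exp_pos. }
  assert (HG : forall n, ex_series (G n)).
  { intro n. eexists. apply (Hper n). }
  assert (HSG : forall n, Series (G n) = / 2 * (phi (S (S n)) - phi n) - Rpower (INR n + q) (- z)).
  { intro n. apply is_series_unique. apply (Hper n). }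
  set (TS := fun N => Series (fun j => Rpower (INR (S N + j) + q) (-3/2))).
  assert (HTS : forall N, 0 <= TS N).
  { intro N. unfold TS. apply Series_nonneg. intro; left; apply exp_pos.
    apply (ex_series_tail (fun n => Rpower (INR n + q) (-3/2))). apply S32_ex; auto. }
  set (tl := fun N k => Series (fun j => Eterm q (S N + j) 0 (z + mu k))).
  assert (Htl : forall N k, Rabs (tl N k) <= TS N * Rpower q (- (mu k - 1))).
  { intros N k. apply tl_bound; auto. specialize (Hmu k); lra. specialize (Hmu k); lra. }
  assert (HWZ : ex_series (fun k => W k * Zf q 0 (z + mu k))).
  { apply ex_series_bound with (fun k => (Rabs (W k) * Rpower q (- (mu k - 1))) * S32 q).
    - intro k. rewrite Rabs_mult.
      pose proof (Z_bound q 0 (z + mu k) (mu k - 1) Hq ltac:(specialize (Hmu k); lra) ltac:(lra)).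
      rewrite Bc_0 in H. pose proof (Rabs_pos (W k)).
      replace (Rabs (W k) * Rpower q (- (mu k - 1)) * S32 q) with (Rabs (W k) * (1 * S32 q * Rpower q (- (mu k - 1)))) by ring.
      apply Rmult_le_compat_l; auto.
    - apply ex_series_scal_r; auto. }
  assert (HWtl : forall N, ex_series (fun k => W k * tl N k)).
  { intro N. apply ex_series_bound with (fun k => (Rabs (W k) * Rpower q (- (mu k - 1))) * TS N).
    - intro k. rewrite Rabs_mult. pose proof (Htl N k). pose proof (Rabs_pos (W k)).
      replace (Rabs (W k) * Rpower q (- (mu k - 1)) * TS N) with (Rabs (W k) * (TS N * Rpower q (- (mu k - 1)))) by ring.
      apply Rmult_le_compat_l; auto.
    - apply ex_series_scal_r; auto. }
  assert (Hdec : forall N,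
    sum_f_R0 (fun n => (-1) ^ n * Rpower (INR n + q) (- z)) N
    - (/ 2 * (Phi a (c0 + 1) - Phi a c0) - Series (fun k => W k * Zf q 0 (z + mu k)))
    = / 2 * ((-1) ^ N * (phi (S (S N)) - phi (S N))) + Series (fun k => W k * tl N k)).
  { intro N.
    assert (E1 : sum_f_R0 (fun n => (-1) ^ n * Rpower (INR n + q) (- z)) N
               = / 2 * sum_f_R0 (fun n => (-1) ^ n * (phi (S (S n)) - phi n)) N
                 - sum_f_R0 (fun n => (-1) ^ n * Series (G n)) N).
    { rewrite scal_sum, <- minus_sum. apply sum_eq. intros n _. rewrite HSG. ring. }
    destruct (sum_Series (fun n => (-1) ^ n) G N HG) as [_ E2].
    assert (E3 : forall k, sum_f_R0 (fun n => (-1) ^ n * G n k) N = W k * (Zf q 0 (z + mu k) - tl N k)).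
    { intro k. unfold Zf, tl. rewrite (Series_tail _ N (Eterm_ex q (z + mu k) Hq ltac:(specialize (Hmu k); lra))).
      replace (sum_f_R0 (fun n : nat => Eterm q n 0 (z + mu k)) N + Series (fun k0 : nat => Eterm q (S N + k0) 0 (z + mu k)) -
               Series (fun j : nat => Eterm q (S N + j) 0 (z + mu k)))
        with (sum_f_R0 (fun n : nat => Eterm q n 0 (z + mu k)) N) by ring.
      rewrite scal_sum. apply sum_eq. intros n _. unfold G, Eterm. simpl. ring. }
    rewrite E1, E2, telescope.
    rewrite (Series_ext _ (fun k => W k * Zf q 0 (z + mu k) - W k * tl N k)).
    2: { intro k. rewrite E3. ring. }
    rewrite Series_minus by auto.
    unfold phi. simpl INR. rewrite Rplus_0_r. ring. }
  apply is_series_unique. apply is_series_Reals. intros eps He.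
  destruct (Rpower_small c0 z Hc ltac:(lra) eps He) as [N1 HN1].
  destruct (tail_lim _ (S32_ex q Hq) (eps / (2 * (K + 1)))) as [N2 HN2].
  { apply Rdiv_lt_0_compat; lra. }
  exists (Nat.max N1 N2). intros N HN. unfold Rdist. rewrite Hdec.
  specialize (HN1 N ltac:(lia)). specialize (HN2 N ltac:(lia)).
  assert (HT2 : TS N < eps / (2 * (K + 1))).
  { unfold TS. eapply Rle_lt_trans; [apply Rle_abs|]. exact HN2. }
  assert (Hd : Rabs (phi (S (S N)) - phi (S N)) <= Rpower (c0 + INR (S N)) (- z)).
  { unfold phi. replace (c0 + INR (S (S N))) with ((c0 + INR (S N)) + 1) by (rewrite (S_INR (S N)); ring).
    replace (- z) with (a - 1) by (unfold a; ring).
    apply Phi_step_bound. unfold a; lra. pose proof (pos_INR (S N)); lra. }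
  assert (Hs : Rabs (Series (fun k => W k * tl N k)) <= K * TS N).
  { unfold K. rewrite <- Series_scal_r. apply Rabs_Series_le.
    - intro k. rewrite Rabs_mult. pose proof (Htl N k). pose proof (Rabs_pos (W k)).
      replace (Rabs (W k) * Rpower q (- (mu k - 1)) * TS N) with (Rabs (W k) * (TS N * Rpower q (- (mu k - 1)))) by ring.
      apply Rmult_le_compat_l; auto.
    - apply ex_series_scal_r; auto. }
  eapply Rle_lt_trans. apply Rabs_triang.
  rewrite Rabs_mult, Rabs_mult, pow_1_abs, Rmult_1_l.
  rewrite (Rabs_right (/ 2)) by lra.
  assert (K * TS N <= eps / 2).
  { apply Rle_trans with ((K + 1) * TS N). pose proof (HTS N). nra.
    apply Rle_trans with ((K + 1) * (eps / (2 * (K + 1)))). apply Rmult_le_compat_l; lra.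
    right. field. lra. }
  lra.
Qed.

Lemma exp_in_exp y : exp_in y (exp y).
Proof. unfold exp. destruct (exist_exp y) as [l Hl]. simpl. exact Hl. Qed.

Lemma exp_series y : is_series (fun i => / INR (fact i) * y ^ i) (exp y).
Proof. apply is_series_Reals. exact (exp_in_exp y). Qed.

Lemma exp_term_bound y k : 0 <= y -> y ^ k / INR (fact k) <= exp y.
Proof.
  intros Hy.
  assert (Hnn : forall i, 0 <= / INR (fact i) * y ^ i).
  { intro i. apply Rmult_le_pos. left; apply Rinv_0_lt_compat, lt_0_INR, lt_O_fact. apply pow_le; auto. }
  eapply Rle_trans. 2: apply (sum_incr _ k (exp y) (exp_in_exp y) Hnn).
  destruct k as [|k]. simpl. unfold Rdiv. lra.
  rewrite tech5. pose proof (cond_pos_sum _ k Hnn). unfold Rdiv. rewrite Rmult_comm. lra.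
Qed.

Definition cphi (y : R) (m : nat) : R := ln y ^ S m / INR (fact (S m)).

Lemma cphi_radius y x : Rbar_lt (Rabs x) (CV_radius (cphi y)).
Proof.
  set (L := Rabs (ln y)).
  assert (HB : forall r, 0 <= r -> Rbar_le r (CV_radius (cphi y))).
  { intros r Hr. apply (proj1 (CV_radius_bounded (cphi y))).
    exists (L * exp (L * r)). intro k. unfold cphi.
    rewrite Rabs_mult, Rabs_div by (apply not_0_INR, fact_neq_0).
    rewrite <- !RPow_abs, (Rabs_right (INR _)) by (apply Rle_ge, pos_INR).
    rewrite (Rabs_right r) by lra. fold L.
    assert (HL : 0 <= L) by apply Rabs_pos.
    pose proof (exp_term_bound (L * r) k ltac:(nra)).
    assert (Hf : INR (fact k) <= INR (fact (S k))).
    { apply le_INR. rewrite fact_simpl. lia. }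
    assert (Hf0 : 0 < INR (fact k)) by (apply lt_0_INR, lt_O_fact).
    replace (L ^ S k / INR (fact (S k)) * r ^ k) with (L * ((L * r) ^ k / INR (fact (S k)))).
    2: { rewrite Rpow_mult_distr. pose proof (fact_neq_0 (S k)). assert (INR (fact (S k)) <> 0) by (apply not_0_INR; auto). simpl pow. field. auto. }
    apply Rmult_le_compat_l; auto.
    eapply Rle_trans; [|exact H].
    unfold Rdiv. apply Rmult_le_compat_l. apply pow_le; nra.
    apply Rinv_le_contravar; auto. }
  specialize (HB (Rabs x + 1) ltac:(pose proof (Rabs_pos x); lra)).
  destruct (CV_radius (cphi y)) as [r| |]; simpl in *; auto; lra.
Qed.

Lemma Phi_PSeries a y : 0 < y -> Phi a y = PSeries (cphi y) a.
Proof.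
  intros Hy. unfold Phi. destruct (Req_EM_T a 0) as [->|Ha].
  - rewrite PSeries_0. unfold cphi. simpl. field.
  - set (L := ln y).
    assert (E1 : exp (a * L) = 1 + Series (fun k => / INR (fact (S k)) * (a * L) ^ S k)).
    { rewrite <- (is_series_unique _ _ (exp_series (a * L))).
      rewrite Series_incr_1. simpl. field. eexists; apply exp_series. }
    assert (E2 : a * PSeries (cphi y) a = Series (fun k => / INR (fact (S k)) * (a * L) ^ S k)).
    { unfold PSeries. rewrite <- Series_scal_l. apply Series_ext. intro k. unfold cphi.
      fold L. rewrite Rpow_mult_distr. pose proof (fact_neq_0 (S k)). assert (INR (fact (S k)) <> 0) by (apply not_0_INR; auto). simpl pow. field. auto. }
    unfold Rpower. replace (a * ln y) with (a * L) by reflexivity. rewrite E1, <- E2. field. auto.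
Qed.

Lemma PS_derive_n_S (c : nat -> R) i k : PS_derive (PS_derive_n i c) k = PS_derive_n (S i) c k.
Proof.
  unfold PS_derive, PS_derive_n. replace (S k + i)%nat with (k + S i)%nat by lia.
  rewrite (fact_simpl k), mult_INR. field. split; apply not_0_INR; try lia. apply fact_neq_0.
Qed.

Lemma PSeries_fam_smooth y lo hi : Smooth lo hi (fun i a => PSeries (PS_derive_n i (cphi y)) a).
Proof.
  intros i a _.
  apply isd_eq with (PSeries (PS_derive (PS_derive_n i (cphi y))) a).
  apply is_derive_PSeries. rewrite CV_radius_derive_n. apply cphi_radius.
  apply PSeries_ext. intro k. apply PS_derive_n_S.
Qed.

Definition HFz (y : R) (i : nat) (z : R) : R := (-1) ^ i * PSeries (PS_derive_n i (cphi y)) (1 - z).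

Lemma HFz_smooth y lo hi : Smooth lo hi (HFz y).
Proof.
  unfold HFz.
  exact (smooth_refl (1 - hi) (1 - lo) lo hi (fun i a => PSeries (PS_derive_n i (cphi y)) a)
           (PSeries_fam_smooth y (1 - hi) (1 - lo)) ltac:(lra) ltac:(lra)).
Qed.

Lemma HFz_0 y z : 0 < y -> HFz y 0 z = Phi (1 - z) y.
Proof.
  intros Hy. unfold HFz. rewrite Phi_PSeries by auto. simpl. rewrite Rmult_1_l.
  apply PSeries_ext. intro k. unfold PS_derive_n. rewrite Nat.add_0_r. field.
  apply not_0_INR, fact_neq_0.
Qed.

Lemma HFz_at1 y l : (-1) ^ l * HFz y l 1 = ln y ^ (l + 1) / INR (l + 1).
Proof.
  unfold HFz. replace (1 - 1) with 0 by ring. rewrite PSeries_0.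
  unfold PS_derive_n, cphi. simpl (0 + l)%nat.
  rewrite <- Rmult_assoc, <- pow_add. replace (l + l)%nat with (2 * l)%nat by lia.
  rewrite pow_1_even, Rmult_1_l. replace (l + 1)%nat with (S l) by lia.
  rewrite (fact_simpl l), mult_INR. simpl (fact 0). simpl INR at 2.
  field. split; apply not_0_INR; try lia. apply fact_neq_0.
Qed.

Lemma lim_pow_ratio e : is_lim_seq (fun k => ((INR k + 3) / (INR k + 2)) ^ e) 1.
Proof.
  induction e as [|e IH].
  - simpl. apply is_lim_seq_const.
  - simpl. replace 1 with (1 * 1) by ring. apply is_lim_seq_mult'; auto.
    apply is_lim_seq_ext with (fun k => 1 + 1 / (INR k + 2)).
    intro k. pose proof (pos_INR k). field. lra.
    pose proof (is_lim_seq_plus' _ _ 1 0 (is_lim_seq_const 1) (lim_c_over 1)) as H.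
    rewrite Rplus_0_r in H. exact H.
Qed.

Lemma ex_series_polygeo e r : 0 < r < 1 -> ex_series (fun k => (INR k + 2) ^ e * r ^ k).
Proof.
  intros Hr.
  apply ex_series_Rabs.
  apply (ex_series_DAlembert _ r). lra.
  - intro k. apply Rmult_integral_contrapositive. split; apply pow_nonzero.
    pose proof (pos_INR k); lra. lra.
  - apply is_lim_seq_ext with (fun k => ((INR k + 3) / (INR k + 2)) ^ e * r).
    + intro k. rewrite S_INR. pose proof (pos_INR k).
      replace (INR k + 1 + 2) with (INR k + 3) by ring.
      assert (H3 : 0 < (INR k + 3) ^ e) by (apply pow_lt; lra).
      assert (H2 : 0 < (INR k + 2) ^ e) by (apply pow_lt; lra).
      assert (Hrk : 0 < r ^ k) by (apply pow_lt; lra).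
      rewrite Rabs_right.
      * unfold Rdiv. rewrite Rpow_mult_distr, <- Rinv_pow by lra. simpl pow. field. lra.
      * apply Rle_ge, Rlt_le, Rdiv_lt_0_compat; apply Rmult_lt_0_compat; auto. apply pow_lt; lra.
    + pose proof (is_lim_seq_mult' _ _ 1 r (lim_pow_ratio e) (is_lim_seq_const r)) as H. rewrite Rmult_1_l in H. exact H.
Qed.

Lemma zetaE_deriv_Zf q j s : 1 < q -> 7/4 < s -> zetaE_deriv j s q = Zf q j s.
Proof.
  intros Hq Hs. unfold zetaE_deriv.
  apply (smooth_Derive_n (7/4) (s + 1) (Zf q)).
  apply Z_smooth; auto.
  intros w Hw. unfold zetaE. apply zetaE_Zf_eq.
  lra.
Qed.

Lemma neg1_pow_comb l j : (j <= l)%nat -> (-1) ^ l * (-1) ^ (l - j) = (-1) ^ j.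
Proof.
  intros H. replace l with ((l - j) + j)%nat at 1 by lia.
  rewrite pow_add. replace ((-1) ^ (l - j) * (-1) ^ j * (-1) ^ (l - j))
    with ((-1) ^ j * ((-1) ^ (l - j) * (-1) ^ (l - j))) by ring.
  rewrite <- pow_add. replace (l - j + (l - j))%nat with (2 * (l - j))%nat by lia.
  rewrite pow_1_even. ring.
Qed.

Section Fam.
Variable q : R.
Hypothesis Hq : 1 < q.
Variable m : nat -> nat.
Hypothesis Hm : forall k, (1 <= m k)%nat.
Variable w : nat -> R.
Hypothesis HN : forall e, ex_series (fun k => Rabs (w k) * (INR (m k) + 1) ^ e * Rpower q (- (INR (m k) - 1))).

Definition PWf k p z := w k * ((-1) ^ p * polyF (ecoef (m k)) (m k) p (1 - z)).
Definition Zk k p z := Zf q p (z + INR (m k)).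
Definition Tk k := leib (PWf k) (Zk k).

Lemma INR_m_ge1 k : 1 <= INR (m k).
Proof. replace 1 with (INR 1) by reflexivity. apply le_INR. apply Hm. Qed.

Lemma PWf_smooth k : Smooth (3/4) (5/4) (PWf k).
Proof.
  unfold PWf. apply (smooth_scal (3/4) (5/4) (w k) (fun p z => (-1) ^ p * polyF (ecoef (m k)) (m k) p (1 - z))).
  exact (smooth_refl (-1) 1 (3/4) (5/4) (polyF (ecoef (m k)) (m k)) (polyF_smooth _ _ (-1) 1) ltac:(lra) ltac:(lra)).
Qed.

Lemma Zk_smooth k : Smooth (3/4) (5/4) (Zk k).
Proof.
  unfold Zk. pose proof (INR_m_ge1 k).
  exact (smooth_trans (7/4) (5/4 + INR (m k) + 1) (3/4) (5/4) (INR (m k)) (Zf q) (Z_smooth q _ Hq) ltac:(lra) ltac:(lra)).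
Qed.

Lemma Tk_smooth k : Smooth (3/4) (5/4) (Tk k).
Proof. unfold Tk. apply smooth_mult. apply PWf_smooth. apply Zk_smooth. Qed.

Lemma PWf_bound k p z : 3/4 < z < 5/4 -> Rabs (PWf k p z) <= Rabs (w k) * (INR (m k) + 1) ^ (S p).
Proof.
  intros Hz. unfold PWf. rewrite Rabs_mult, Rabs_mult, pow_1_abs, Rmult_1_l.
  apply Rmult_le_compat_l. apply Rabs_pos.
  apply polyF_bound. apply ecoef_bound. apply Rabs_le; lra.
Qed.

Lemma Zk_bound k j z : 3/4 < z < 5/4 -> Rabs (Zk k j z) <= Bc j * S32 q * Rpower q (- (INR (m k) - 1)).
Proof.
  intros Hz. unfold Zk. pose proof (INR_m_ge1 k). apply Z_bound; auto; lra.
Qed.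

Definition Cc i := S32 q * sum_f_R0 (fun p => binom i p * Bc (i - p)) i.

Definition Nk e k := Rabs (w k) * (INR (m k) + 1) ^ e * Rpower q (- (INR (m k) - 1)).

Lemma S32_nonneg : 0 <= S32 q.
Proof. unfold S32. apply Series_nonneg. intro; left; apply exp_pos. apply S32_ex; auto. Qed.

Lemma Tk_bound k i z : 3/4 < z < 5/4 -> Rabs (Tk k i z) <= Cc i * Nk (S i) k.
Proof.
  intros Hz. unfold Tk, leib, Cc, Nk.
  eapply Rle_trans. apply sum_f_R0_triangle.
  set (X := S32 q * (Rabs (w k) * (INR (m k) + 1) ^ S i * Rpower q (- (INR (m k) - 1)))).
  apply Rle_trans with (sum_f_R0 (fun p => binom i p * Bc (i - p) * X) i).
  - apply sum_Rle. intros p Hp.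
    rewrite !Rabs_mult, (Rabs_right (binom i p)) by (apply Rle_ge, binom_nonneg).
    pose proof (PWf_bound k p z Hz). pose proof (Zk_bound k (i - p) z Hz).
    pose proof (binom_nonneg i p). pose proof (Bc_pos (i - p)). pose proof S32_nonneg.
    assert (Hpow : (INR (m k) + 1) ^ S p <= (INR (m k) + 1) ^ S i).
    { apply Rle_pow. pose proof (pos_INR (m k)); lra. lia. }
    assert (HR : 0 < Rpower q (- (INR (m k) - 1))) by apply exp_pos.
    pose proof (Rabs_pos (w k)). pose proof (Rabs_pos (PWf k p z)). pose proof (Rabs_pos (Zk k (i - p) z)).
    unfold X.
    apply Rle_trans with (binom i p * (Rabs (w k) * (INR (m k) + 1) ^ S i) * (Bc (i - p) * S32 q * Rpower q (- (INR (m k) - 1)))).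
    + apply Rmult_le_compat. nra. auto.
      apply Rmult_le_compat_l. auto. eapply Rle_trans. eauto.
      apply Rmult_le_compat_l. auto. auto. auto.
    + right. ring.
  - right. rewrite <- scal_sum. unfold X. ring.
Qed.

Lemma Nk_ex e : ex_series (Nk e).
Proof. unfold Nk. apply HN. Qed.

Definition SF i z := Series (fun k => Tk k i z).

Lemma SF_smooth : Smooth (3/4) (5/4) SF.
Proof.
  unfold SF. apply (smooth_series (3/4) (5/4) Tk (fun i k => Cc i * Nk (S i) k)).
  - apply Tk_smooth.
  - intros i k z Hz. apply Tk_bound; auto.
  - intro i. apply ex_series_ext with (fun k => scal (Cc i) (Nk (S i) k)). reflexivity.
    exact (@ex_series_scal_l R_AbsRing R_NormedModule _ _ (Nk_ex (S i))).
Qed.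

Lemma Tk_0 k z : Tk k 0 z = w k * dcoef (1 - z) (m k) * Zf q 0 (z + INR (m k)).
Proof.
  unfold Tk, leib, PWf, Zk. simpl. rewrite polyF_0. unfold dcoef. ring.
Qed.

Lemma Tk_at1 k l : (-1) ^ l * Tk k l 1 = INR (fact l) * (w k / INR (fact (S (m k))) *
   sum_f_R0 (fun j => (-1) ^ j / INR (fact j) * stirling1 (S (m k)) (l - j + 1) *
                      zetaE_deriv j (INR (S (m k))) q) l).
Proof.
  unfold Tk, leib. rewrite scal_sum, scal_sum, scal_sum.
  rewrite <- sum_f_R0_skip. apply sum_eq. intros j Hj.
  unfold PWf, Zk. replace (1 - 1) with 0 by ring. rewrite polyF_at0.
  replace (l - (l - j))%nat with j by lia.
  rewrite zetaE_deriv_Zf by (auto; rewrite S_INR; pose proof (INR_m_ge1 k); lra).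
  rewrite S_INR. replace (INR (m k) + 1) with (1 + INR (m k)) by ring.
  replace (l - j + 1)%nat with (S (l - j)) by lia.
  pose proof (binom_fact l (l - j) ltac:(lia)) as HB. replace (l - (l - j))%nat with j in HB by lia.
  pose proof (neg1_pow_comb l j Hj) as HS.
  unfold ecoef.
  assert (Hf1 : INR (fact j) <> 0) by (apply not_0_INR, fact_neq_0).
  assert (Hf2 : INR (fact (l - j)) <> 0) by (apply not_0_INR, fact_neq_0).
  assert (Hf3 : INR (fact (S (m k))) <> 0) by (apply not_0_INR, fact_neq_0).
  rewrite <- HB.
  transitivity (((-1) ^ l * (-1) ^ (l - j)) * (binom l (l - j) * INR (fact (l - j))) * w k *
     stirling1 (S (m k)) (S (l - j)) / INR (fact (S (m k))) * Zf q j (1 + INR (m k))).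
  { field. auto. }
  rewrite HS. field. auto.
Qed.

End Fam.

Lemma final_generic q m w c0 l :
  1 < q -> (forall k, (1 <= m k)%nat) ->
  (forall e, ex_series (fun k => Rabs (w k) * (INR (m k) + 1) ^ e * Rpower q (- (INR (m k) - 1)))) ->
  0 < c0 ->
  (forall z, 3/4 < z < 5/4 -> zetaE z q =
      / 2 * (Phi (1 - z) (c0 + 1) - Phi (1 - z) c0) - Series (fun k => Tk q m w k 0 z)) ->
  exists Ssum,
    is_series (fun k => w k / INR (fact (S (m k))) *
      sum_f_R0 (fun j => (-1) ^ j / INR (fact j) * stirling1 (S (m k)) (l - j + 1) *
                         zetaE_deriv j (INR (S (m k))) q) l) Ssum /\
    gammaE l q = (ln (c0 + 1) ^ (l + 1) - ln c0 ^ (l + 1)) / (2 * INR (l + 1)) - INR (fact l) * Ssum.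
Proof.
  intros Hq Hm HN Hc Hid.
  set (F := fun i z => / 2 * (HFz (c0 + 1) i z - HFz c0 i z) - SF q m w i z).
  assert (HF : Smooth (3/4) (5/4) F).
  { unfold F. apply smooth_minus. apply (smooth_scal (3/4) (5/4) (/ 2) (fun i z => HFz (c0 + 1) i z - HFz c0 i z)).
    apply smooth_minus; apply HFz_smooth. apply SF_smooth; auto. }
  assert (HD : Derive_n (fun w => zetaE w q) l 1 = F l 1).
  { apply (smooth_Derive_n (3/4) (5/4) F); auto. 2: lra.
    intros z Hz. rewrite Hid by auto. unfold F, SF. rewrite !HFz_0 by lra. reflexivity. }
  set (term := fun k => w k / INR (fact (S (m k))) *
      sum_f_R0 (fun j => (-1) ^ j / INR (fact j) * stirling1 (S (m k)) (l - j + 1) *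
                         zetaE_deriv j (INR (S (m k))) q) l).
  assert (Hfl : 0 < INR (fact l)) by (apply lt_0_INR, lt_O_fact).
  assert (HT : forall k, term k = / INR (fact l) * ((-1) ^ l * Tk q m w k l 1)).
  { intro k. rewrite Tk_at1; auto. unfold term. field; repeat split; try lra; apply not_0_INR, fact_neq_0. }
  assert (HexT : ex_series (fun k => Tk q m w k l 1)).
  { apply ex_series_bound with (fun k => Cc q l * Nk q m w (S l) k).
    intro k. apply Tk_bound; auto; lra.
    apply ex_series_ext with (fun k => scal (Cc q l) (Nk q m w (S l) k)). reflexivity.
    exact (@ex_series_scal_l R_AbsRing R_NormedModule _ _ (Nk_ex q m w HN (S l))). }
  assert (Hex : ex_series term).
  { apply ex_series_ext with (fun k => scal (/ INR (fact l) * (-1) ^ l) (Tk q m w k l 1)).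
    intro k. rewrite HT. unfold scal; simpl; unfold mult; simpl. ring.
    exact (@ex_series_scal_l R_AbsRing R_NormedModule _ _ HexT). }
  exists (Series term). split. apply Series_correct; auto.
  unfold gammaE, zetaE_deriv. rewrite HD. unfold F, SF.
  assert (E : INR (fact l) * Series term = (-1) ^ l * Series (fun k => Tk q m w k l 1)).
  { rewrite <- Series_scal_l, <- Series_scal_l. apply Series_ext. intro k. rewrite HT. field. lra. }
  rewrite E.
  pose proof (HFz_at1 (c0 + 1) l) as H1. pose proof (HFz_at1 c0 l) as H2.
  assert (Hl : INR (l + 1) <> 0) by (apply not_0_INR; lia).
  transitivity (/ 2 * ((-1) ^ l * HFz (c0 + 1) l 1 - (-1) ^ l * HFz c0 l 1) - (-1) ^ l * Series (fun k : nat => Tk q m w k l 1)).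
  ring. rewrite H1, H2. field. auto.
Qed.

Lemma is_series_ext_R (a b : nat -> R) (l : R) : (forall n, a n = b n) -> is_series a l -> is_series b l.
Proof. intros E H. exact (is_series_ext a b l E H). Qed.

Lemma Rpower_neg_lt1 q b : 1 < q -> 0 < b -> 0 < Rpower q (- b) < 1.
Proof.
  intros Hq Hb. split. apply exp_pos. unfold Rpower. rewrite <- exp_0. apply exp_increasing.
  assert (0 < ln q) by (rewrite <- ln_1; apply ln_increasing; lra). nra.
Qed.

Lemma Rpower_lin q (c d : R) k : Rpower q (- (c + d * INR k)) = Rpower q (- c) * Rpower q (- d) ^ k.
Proof. unfold Rpower. rewrite exp_pow, <- exp_plus. f_equal. ring. Qed.

Lemma HN2 q : 1 < q -> forall e, ex_series (fun k => Rabs ((fun _ : nat => 1) k) * (INR ((fun k => 2 * S k)%nat k) + 1) ^ e *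
   Rpower q (- (INR ((fun k => 2 * S k)%nat k) - 1))).
Proof.
  intros Hq e. cbv beta.
  pose proof (Rpower_neg_lt1 q (2) Hq ltac:(lra)) as Hr.
  apply ex_series_bound with (fun k => (2 ^ e * Rpower q (- (1))) * ((INR k + 2) ^ e * Rpower q (- (2)) ^ k)).
  - intro k. rewrite Rabs_R1, Rmult_1_l.
    rewrite mult_INR. change (INR 2) with 2. rewrite S_INR.
    replace (- (2 * (INR k + 1) - 1)) with (- (1 + 2 * INR k)) by ring.
    rewrite Rpower_lin.
    replace (2 * (INR k + 1) + 1) with ((1 + 1) * (INR k + 1) + 1) by ring.
    pose proof (pos_INR k).
    assert (H0 : 0 <= ((1 + 1) * (INR k + 1) + 1) ^ e) by (apply pow_le; lra).
    assert (H1 : 0 < Rpower q (- (1)) * Rpower q (- (2)) ^ k).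
    { apply Rmult_lt_0_compat. apply exp_pos. apply pow_lt. apply exp_pos. }
    rewrite Rabs_right by (apply Rle_ge; apply Rmult_le_pos; lra).
    assert (H2 : ((1 + 1) * (INR k + 1) + 1) ^ e <= 2 ^ e * (INR k + 2) ^ e).
    { rewrite <- Rpow_mult_distr. apply pow_incr. lra. }
    replace (2 ^ e * Rpower q (- (1)) * ((INR k + 2) ^ e * Rpower q (- (2)) ^ k))
      with ((2 ^ e * (INR k + 2) ^ e) * (Rpower q (- (1)) * Rpower q (- (2)) ^ k)) by ring.
    apply Rmult_le_compat_r; lra.
  - apply ex_series_ext with (fun k => scal (2 ^ e * Rpower q (- (1))) ((INR k + 2) ^ e * Rpower q (- (2)) ^ k)). reflexivity.
    exact (@ex_series_scal_l R_AbsRing R_NormedModule _ _ (ex_series_polygeo e _ Hr)).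
Qed.

Lemma HN1 q : 2 < q -> forall e, ex_series (fun k => Rabs ((fun k => (-1) ^ S k * 2 ^ S k) k) * (INR ((fun k => S k) k) + 1) ^ e *
   Rpower q (- (INR ((fun k => S k) k) - 1))).
Proof.
  intros Hq e. cbv beta.
  assert (Hr : 0 < 2 * Rpower q (- (1)) < 1).
  { rewrite Rpower_Ropp, Rpower_1 by lra.
    assert (0 < / q < / 2) by (split; [apply Rinv_0_lt_compat; lra| apply Rinv_lt_contravar; lra]).
    lra. }
  apply ex_series_ext with (fun k => scal 2 ((INR k + 2) ^ e * (2 * Rpower q (- (1))) ^ k)).
  - intro k. change (scal 2 ?x) with (2 * x).
    rewrite Rabs_mult, pow_1_abs, Rmult_1_l, Rabs_right by (apply Rle_ge, pow_le; lra).
    rewrite S_INR. replace (- (INR k + 1 - 1)) with (- (0 + 1 * INR k)) by ring.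
    rewrite Rpower_lin. replace (- 0) with 0 by ring. rewrite Rpower_0r.
    replace (INR k + 1 + 1) with (INR k + 2) by ring.
    replace (- 1 * 1) with (- (1)) by ring.
    rewrite Rpow_mult_distr. simpl. ring.
  - exact (@ex_series_scal_l R_AbsRing R_NormedModule _ _ (ex_series_polygeo e _ Hr)).
Qed.

Lemma W_bound m z : 3/4 < z < 5/4 -> Rabs (dcoef (1 - z) m) <= (INR m + 1) ^ 1.
Proof.
  intros Hz. unfold dcoef. rewrite <- polyF_0. apply polyF_bound. apply ecoef_bound. apply Rabs_le; lra.
Qed.

Lemma Hid2 q : 1 < q -> forall z, 3/4 < z < 5/4 ->
  zetaE z q = / 2 * (Phi (1 - z) (q - 1 + 1) - Phi (1 - z) (q - 1)) -
              Series (fun k => Tk q (fun k => 2 * S k)%nat (fun _ => 1) k 0 z).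
Proof.
  intros Hq z Hz.
  rewrite (Series_ext _ (fun k => (1 * dcoef (1 - z) (2 * S k)) * Zf q 0 (z + INR (2 * S k)))).
  2: { intro k. rewrite Tk_0. reflexivity. }
  apply (zeta_identity q (q - 1) (fun k => 1 * dcoef (1 - z) (2 * S k)) (fun k => INR (2 * S k)) z).
  - auto.
  - lra.
  - lra.
  - intro k. replace 1 with (INR 1) by reflexivity. apply le_INR. lia.
  - apply ex_series_bound with (fun k => Rabs ((fun _ : nat => 1) k) * (INR ((fun k => 2 * S k)%nat k) + 1) ^ 1 *
       Rpower q (- (INR ((fun k => 2 * S k)%nat k) - 1))).
    + intro k. cbv beta. rewrite Rabs_mult, Rabs_Rabsolu, (Rabs_right (Rpower _ _)) by (left; apply exp_pos).
      apply Rmult_le_compat_r. left; apply exp_pos. rewrite Rabs_R1, !Rmult_1_l. apply W_bound; auto.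
    + apply HN2; auto.
  - intro n. pose proof (perN_2 z (INR n + q) ltac:(lra) ltac:(pose proof (pos_INR n); lra)) as H.
    replace (q - 1 + INR (S (S n))) with (INR n + q + 1) by (rewrite !S_INR; ring).
    replace (q - 1 + INR n) with (INR n + q - 1) by ring.
    apply is_series_ext_R with (2 := H). intro k. ring.
Qed.

Lemma Hid1 q : 2 < q -> forall z, 3/4 < z < 5/4 ->
  zetaE z q = / 2 * (Phi (1 - z) (q - 2 + 1) - Phi (1 - z) (q - 2)) -
              Series (fun k => Tk q (fun k => S k) (fun k => (-1) ^ S k * 2 ^ S k) k 0 z).
Proof.
  intros Hq z Hz.
  rewrite (Series_ext _ (fun k => ((-1) ^ S k * 2 ^ S k * dcoef (1 - z) (S k)) * Zf q 0 (z + INR (S k)))).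
  2: { intro k. rewrite Tk_0. reflexivity. }
  apply (zeta_identity q (q - 2) (fun k => (-1) ^ S k * 2 ^ S k * dcoef (1 - z) (S k)) (fun k => INR (S k)) z).
  - lra.
  - lra.
  - lra.
  - intro k. replace 1 with (INR 1) by reflexivity. apply le_INR. lia.
  - apply ex_series_bound with (fun k => Rabs ((fun k => (-1) ^ S k * 2 ^ S k) k) * (INR ((fun k => S k) k) + 1) ^ 1 *
       Rpower q (- (INR ((fun k => S k) k) - 1))).
    + intro k. cbv beta. rewrite Rabs_mult, Rabs_Rabsolu, (Rabs_right (Rpower _ _)) by (left; apply exp_pos).
      apply Rmult_le_compat_r. left; apply exp_pos. rewrite Rabs_mult.
      apply Rmult_le_compat_l. apply Rabs_pos. apply W_bound; auto.
    + apply HN1; auto.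
  - intro n. pose proof (perN_1 z (INR n + q) ltac:(lra) ltac:(pose proof (pos_INR n); lra)) as H.
    replace (q - 2 + INR (S (S n))) with (INR n + q) by (rewrite !S_INR; ring).
    replace (q - 2 + INR n) with (INR n + q - 2) by ring.
    apply is_series_ext_R with (2 := H). intro k. ring.
Qed.

Theorem theorem3p19 (l : nat) :
  (forall q : R, 2 < q ->
    exists Ssum : R,
      is_series (fun k : nat =>
        let k1 := S k in
        (-1) ^ k1 * 2 ^ k1 / INR (fact (k1 + 1)) *
        sum_f_R0 (fun j => (-1) ^ j / INR (fact j) *
                   stirling1 (k1 + 1) (l - j + 1) *
                   zetaE_deriv j (INR (k1 + 1)) q) l) Ssum /\
      gammaE l q =
        ((ln (q - 1)) ^ (l + 1) - (ln (q - 2)) ^ (l + 1)) / (2 * INR (l + 1))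
        - INR (fact l) * Ssum) /\
  (forall q : R, 1 < q ->
    exists Ssum : R,
      is_series (fun k : nat =>
        let k1 := S k in
        / INR (fact (2 * k1 + 1)) *
        sum_f_R0 (fun j => (-1) ^ j / INR (fact j) *
                   stirling1 (2 * k1 + 1) (l - j + 1) *
                   zetaE_deriv j (INR (2 * k1 + 1)) q) l) Ssum /\
      gammaE l q =
        ((ln q) ^ (l + 1) - (ln (q - 1)) ^ (l + 1)) / (2 * INR (l + 1))
        - INR (fact l) * Ssum).
Proof.
  split.
  - intros q Hq.
    assert (Hq1 : 1 < q) by lra. assert (Hc : 0 < q - 2) by lra.
    assert (Hm : forall k, (1 <= (fun k => S k) k)%nat) by (intro; lia).
    destruct (final_generic q (fun k => S k) (fun k => (-1) ^ S k * 2 ^ S k) (q - 2) l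
                Hq1 Hm (HN1 q Hq) Hc (Hid1 q Hq)) as [Ssum [Hs Hg]].
    exists Ssum. split.
    + apply is_series_ext_R with (2 := Hs). intro k. cbv zeta beta.
      replace (S k + 1)%nat with (S (S k)) by lia. reflexivity.
    + rewrite Hg. replace (q - 2 + 1) with (q - 1) by ring. reflexivity.
  - intros q Hq.
    assert (Hc : 0 < q - 1) by lra.
    assert (Hm : forall k, (1 <= (fun k => 2 * S k) k)%nat) by (intro; lia).
    destruct (final_generic q (fun k => 2 * S k)%nat (fun _ => 1) (q - 1) l
                Hq Hm (HN2 q Hq) Hc (Hid2 q Hq)) as [Ssum [Hs Hg]].
    exists Ssum. split.
    + apply is_series_ext_R with (2 := Hs). intro k. cbv zeta beta.
      replace (2 * S k + 1)%nat with (S (2 * S k)) by lia. unfold Rdiv. ring.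
    + rewrite Hg. replace (q - 1 + 1) with q by ring. reflexivity.
Qed.
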